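(* Let $0<\epsilon<1$, $r>0$ be constants, $p_2=\frac{1-\epsilon}{n}$, $p_3=\frac{r}{n\ln n}$, and $K_0=\max\{1,\lambda_1^{-1}(10)\}=\max\{1,\tfrac{2(9+\epsilon)}{r}\}$. Then with probability tending to $1$ as $n\to\infty$, there is no vertex $v$ of $\mathbb{G}(n,p_2,p_3)$ whose propagation component satisfies $K_0\ln n\le |C_v|\le n-1$.
   Context: $\mathbb{G}(n,p_2,p_3)$ is the random hypergraph on a vertex set $V$ with $|V|=n$ in which each of the $\binom n2$ possible 2-element edges is present with probability $p_2$ and each of the $\binom n3$ possible 3-element hyperedges is present with probability $p_3$, all independently. Propagation process from a vertex $v$: one maintains a set $\mathcal{Y}_t$ of active vertices and a set $\mathcal{D}_t$ of inactive vertices, with $\mathcal{Y}_0=\{v\}$, $\mathcal{D}_0=\emptyset$; vertices in neither set are unexplored. At time $t=0,1,2,\dots$, while $\mathcal{Y}_t\neq\emptyset$, pick an active vertex $v_t\in\mathcal{Y}_t$ and let $U_t$ be the set of unexplored vertices $u$ such that $\{v_t,u\}$ is a 2-edge or $\{v_t,u,w\}$ is a 3-edge for some $w\in\mathcal{D}_t$; set $\mathcal{Y}_{t+1}=(\mathcal{Y}_t\cup U_t)\setminus\{v_t\}$ and $\mathcal{D}_{t+1}=\mathcal{D}_t\cup\{v_t\}$. The process stops at $T_v=\min\{t:\mathcal{Y}_t=\emptyset\}$, and the propagation component of $v$ is $C_v=\mathcal{D}_{T_v}$, so $|C_v|=T_v$. Here $\lambda_1(x)=1-\epsilon+\frac r2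 x$. *)

(* Defs.v *)
From Stdlib Require Import Reals Lra Lia List Permutation ClassicalEpsilon.
Import ListNotations.
Open Scope R_scope.

(* Vertex set V = {0, ..., n-1}. *)

(* All 2-element subsets {i,j} of V, encoded as (i,j) with i < j. *)
Definition pairs (n : nat) : list (nat * nat) :=
  flat_map (fun j => map (fun i => (i, j)) (seq 0 j)) (seq 0 n).

(* All 3-element subsets {i,j,k} of V, encoded as (i,j,k) with i < j < k. *)
Definition triples (n : nat) : list (nat * nat * nat) :=
  flat_map (fun k => flat_map (fun j => map (fun i => (i, j, k)) (seq 0 j)) (seq 0 k))
           (seq 0 n).

(* A hypergraph outcome is (b2, b3): b2 has one bit per element of [pairs n]
   (edge present or not), b3 one bit per element of [triples n]. *)

Definition edge2 (n : nat) (b2 : list bool) (x y : nat) : Prop :=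
  exists k i j, nth_error (pairs n) k = Some (i, j) /\ nth_error b2 k = Some true /\
    ((x = i /\ y = j) \/ (x = j /\ y = i)).

Definition edge3 (n : nat) (b3 : list bool) (x y z : nat) : Prop :=
  exists k i j l, nth_error (triples n) k = Some (i, j, l) /\ nth_error b3 k = Some true /\
    Permutation [x; y; z] [i; j; l].

Fixpoint expect (p : R) (m : nat) (f : list bool -> R) : R :=
  match m with
  | O => f nil
  | S m' => p * expect p m' (fun l => f (true :: l))
            + (1 - p) * expect p m' (fun l => f (false :: l))
  end.

Definition indic (P : Prop) : R :=
  if excluded_middle_informative P then 1 else 0.

Definition prob_G (n : nat) (p2 p3 : R) (E : list bool -> list bool -> Prop) : R :=
  expect p2 (length (pairs n)) (fun b2 =>
    expect p3 (length (triples n)) (fun b3 => indic (E b2 b3))).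

Definition newly (n : nat) (b2 b3 : list bool) (Yt Dt : nat -> Prop) (w u : nat) : Prop :=
  (u < n)%nat /\ ~ Yt u /\ ~ Dt u /\
  (edge2 n b2 w u \/ exists x, Dt x /\ edge3 n b3 w u x).

(* (Y, D) is a run of the propagation process from v (active/inactive sets
   indexed by time), which stops at time T = T_v; then |C_v| = |D_T| = T. *)
Definition propagation_run (n : nat) (b2 b3 : list bool) (v : nat)
    (Y D : nat -> nat -> Prop) (T : nat) : Prop :=
  (v < n)%nat /\
  (forall u, Y O u <-> u = v) /\
  (forall u, ~ D O u) /\
  (forall t, (t < T)%nat -> exists w, Y t w /\
      (forall u, Y (S t) u <-> ((Y t u \/ newly n b2 b3 (Y t) (D t) w u) /\ u <> w)) /\
      (forall u, D (S t) u <-> (D t u \/ u = w))) /\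
  (forall u, ~ Y T u).

Definition lambda1 (eps r x : R) : R := 1 - eps + r / 2 * x.

(* K0 = max{1, lambda1^{-1}(10)} = max{1, 2(9+eps)/r}. *)
Definition K0 (eps r : R) : R := Rmax 1 (2 * (9 + eps) / r).

(* Main.v *)
Require Import Defs.
From Stdlib Require Import Reals Lra Lia List Permutation ClassicalEpsilon Factorial ZArith.
Import ListNotations.
Open Scope R_scope.

Definition cnt {A} (f : A -> bool) (l : list A) : nat := length (filter f l).

Lemma cnt_app {A} (f : A -> bool) l1 l2 : cnt f (l1 ++ l2) = (cnt f l1 + cnt f l2)%nat.
Proof. unfold cnt. rewrite filter_app, length_app. reflexivity. Qed.

Lemma cnt_map {A B} (f : B -> bool) (g : A -> B) l : cnt f (map g l) = cnt (fun x => f (g x)) l.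
Proof. induction l as [|x l IH]; simpl; auto. unfold cnt in *; simpl. destruct (f (g x)); simpl; auto. Qed.

Lemma cnt_ext {A} (f g : A -> bool) l : (forall x, In x l -> f x = g x) -> cnt f l = cnt g l.
Proof. intros H. unfold cnt. rewrite (filter_ext_in f g); auto. Qed.

Lemma cnt_false {A} (f : A -> bool) l : (forall x, In x l -> f x = false) -> cnt f l = 0%nat.
Proof. intros H. unfold cnt. induction l as [|x l IH]; simpl; auto. rewrite H by (left; auto). apply IH. intros; apply H; right; auto. Qed.

Lemma cnt_cons {A} (f : A -> bool) x l : cnt f (x :: l) = ((if f x then 1 else 0) + cnt f l)%nat.
Proof. unfold cnt; simpl. destruct (f x); reflexivity. Qed.

Lemma pairs_S n : pairs (S n) = pairs n ++ map (fun i => (i, n)) (seq 0 n).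
Proof. unfold pairs. rewrite seq_S, flat_map_app. simpl. rewrite app_nil_r. reflexivity. Qed.

Lemma triples_S n : triples (S n) = triples n ++ map (fun p => (fst p, snd p, n)) (pairs n).
Proof.
  unfold triples at 1. rewrite seq_S, flat_map_app. simpl. rewrite app_nil_r. f_equal.
  unfold pairs. generalize (seq 0 n). induction l as [|j l IH]; simpl; auto.
  rewrite map_app, IH, map_map. reflexivity.
Qed.

Lemma in_pairs n i j : In (i, j) (pairs n) <-> (i < j < n)%nat.
Proof.
  unfold pairs. rewrite in_flat_map. split.
  - intros [j' [Hj Hi]]. apply in_map_iff in Hi. destruct Hi as [i' [E Hi]]. inversion E; subst.
    apply in_seq in Hj. apply in_seq in Hi. lia.
  - intros H. exists j. split. apply in_seq; lia. apply in_map_iff. exists i. split; auto. apply in_seq; lia.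
Qed.

Lemma in_triples n i j l : In (i, j, l) (triples n) <-> (i < j < l /\ l < n)%nat.
Proof.
  unfold triples. rewrite in_flat_map. split.
  - intros [l' [Hl H]]. apply in_flat_map in H. destruct H as [j' [Hj Hi]].
    apply in_map_iff in Hi. destruct Hi as [i' [E Hi]]. inversion E; subst.
    apply in_seq in Hj. apply in_seq in Hi. apply in_seq in Hl. lia.
  - intros H. exists l. split. apply in_seq; lia. apply in_flat_map. exists j. split. apply in_seq; lia.
    apply in_map_iff. exists i. split; auto. apply in_seq; lia.
Qed.

Lemma nodup_pairs n : NoDup (pairs n).
Proof.
  induction n. constructor. rewrite pairs_S. apply NoDup_app; auto.
  - apply FinFun.Injective_map_NoDup. intros a b E; inversion E; auto. apply seq_NoDup.
  - intros [i j] H1 H2. apply in_pairs in H1. apply in_map_iff in H2. destruct H2 as [x [E _]]. inversion E; lia.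
Qed.

Lemma nodup_triples n : NoDup (triples n).
Proof.
  induction n. constructor. rewrite triples_S. apply NoDup_app; auto.
  - apply FinFun.Injective_map_NoDup. intros [a b] [c d] E; inversion E; auto. apply nodup_pairs.
  - intros [[i j] l] H1 H2. apply in_triples in H1. apply in_map_iff in H2. destruct H2 as [x [E _]]. inversion E; lia.
Qed.

Definition nf (f : nat -> bool) x := negb (f x).

Lemma cnt_seq_S (f : nat -> bool) n : cnt f (seq 0 (S n)) = (cnt f (seq 0 n) + if f n then 1 else 0)%nat.
Proof. rewrite seq_S, cnt_app. simpl. unfold cnt at 2; simpl. destruct (f n); simpl; lia. Qed.
Lemma cnt_seq_nS (f : nat -> bool) n : cnt (nf f) (seq 0 (S n)) = (cnt (nf f) (seq 0 n) + if f n then 0 else 1)%nat.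
Proof. rewrite seq_S, cnt_app. simpl. unfold cnt at 2; simpl. unfold nf; destruct (f n); simpl; lia. Qed.

Definition cross (f : nat -> bool) (p : nat * nat) := xorb (f (fst p)) (f (snd p)).
Definition in2 (f : nat -> bool) (p : nat * nat) := andb (f (fst p)) (f (snd p)).
Definition ex2 (f : nat -> bool) (t : nat * nat * nat) :=
  match t with (i, j, l) => Nat.eqb ((if f i then 1 else 0) + (if f j then 1 else 0) + (if f l then 1 else 0))%nat 2 end.
Definition in3 (f : nat -> bool) (t : nat * nat * nat) := match t with (i, j, l) => andb (andb (f i) (f j)) (f l) end.

Lemma count_all (f : nat -> bool) n :
  let c := cnt f (seq 0 n) in let d := cnt (nf f) (seq 0 n) in
  cnt (cross f) (pairs n) = (c * d)%nat /\
  (2 * cnt (in2 f) (pairs n) + c = c * c)%nat /\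
  (2 * cnt (ex2 f) (triples n) + c * d = c * c * d)%nat /\
  (6 * cnt (in3 f) (triples n) + 3 * c * c = c * c * c + 2 * c)%nat.
Proof.
  intros c d. subst c d. induction n as [|n IH]. { unfold cnt; simpl. lia. }
  destruct IH as [H1 [H2 [H3 H4]]].
  assert (Ec : cnt (fun i => f (fst (i, n))) (seq 0 n) = cnt f (seq 0 n)) by (apply cnt_ext; auto).
  assert (Cr : cnt (fun x => cross f (x, n)) (seq 0 n) = if f n then cnt (nf f) (seq 0 n) else cnt f (seq 0 n)).
  { unfold cross; simpl. destruct (f n); apply cnt_ext; intros; unfold nf; destruct (f x); reflexivity. }
  assert (I2 : cnt (fun x => in2 f (x, n)) (seq 0 n) = if f n then cnt f (seq 0 n) else 0%nat).
  { unfold in2; simpl. destruct (f n).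
    - apply cnt_ext; intros; destruct (f x); reflexivity.
    - apply cnt_false. intros; destruct (f x); reflexivity. }
  assert (E2 : cnt (fun p => ex2 f (fst p, snd p, n)) (pairs n) = if f n then cnt (cross f) (pairs n) else cnt (in2 f) (pairs n)).
  { destruct (f n) eqn:Fn; apply cnt_ext; intros [i j] _; unfold ex2, cross, in2; simpl; rewrite Fn;
    destruct (f i), (f j); reflexivity. }
  assert (I3 : cnt (fun p => in3 f (fst p, snd p, n)) (pairs n) = if f n then cnt (in2 f) (pairs n) else 0%nat).
  { destruct (f n) eqn:Fn.
    - apply cnt_ext; intros [i j] _; unfold in3, in2; simpl; rewrite Fn. destruct (f i), (f j); reflexivity.
    - apply cnt_false. intros [i j] _. unfold in3; simpl. rewrite Fn. destruct (f i), (f j); reflexivity. }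
  rewrite pairs_S, triples_S, !cnt_app, !cnt_map, cnt_seq_S, cnt_seq_nS.
  rewrite Cr, I2. rewrite E2, I3.
  destruct (f n); simpl; nia.
Qed.

Definition posn {A} (f : A -> bool) (L : list A) : list nat :=
  filter (fun q => match nth_error L q with Some x => f x | None => false end) (seq 0 (length L)).

Lemma in_posn {A} (f : A -> bool) L q : In q (posn f L) <-> exists x, nth_error L q = Some x /\ f x = true.
Proof.
  unfold posn. rewrite filter_In, in_seq. split.
  - intros [_ H]. destruct (nth_error L q) eqn:E; [eauto|discriminate].
  - intros [x [E F]]. rewrite E. split; auto. assert (nth_error L q <> None) by congruence. apply nth_error_Some in H. lia.
Qed.

Lemma posn_nodup {A} (f : A -> bool) L : NoDup (posn f L).
Proof. apply NoDup_filter, seq_NoDup. Qed.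

Lemma posn_length {A} (f : A -> bool) L : length (posn f L) = cnt f L.
Proof.
  unfold posn. induction L as [|x L IH]; simpl; auto.
  unfold cnt in *. simpl. rewrite <- seq_shift.
  assert (Hm : forall (g : nat -> bool) l, filter g (map S l) = map S (filter (fun q => g (S q)) l)).
  { intros g l. induction l; simpl; auto. destruct (g (S a)); simpl; f_equal; auto. }
  rewrite Hm. simpl. destruct (f x); simpl; rewrite length_map, IH; auto.
Qed.

Fixpoint choose (l : list nat) (k : nat) : list (list nat) :=
  match l with
  | [] => match k with O => [[]] | S _ => [] end
  | x :: l' => match k with O => [[]] | S k' => map (cons x) (choose l' k') ++ choose l' k end
  end.

Fixpoint binom (n k : nat) : nat :=
  match n with
  | O => match k with O => 1%nat | S _ => 0%nat end
  | S n' => match k with O => 1%nat | S k' => (binom n' k' + binom n' k)%nat end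
  end.

Lemma choose_length l k : length (choose l k) = binom (length l) k.
Proof.
  revert k; induction l as [|x l IH]; intros [|k]; simpl; auto.
  rewrite length_app, length_map, !IH. reflexivity.
Qed.

Lemma choose_prop l k s : In s (choose l k) -> incl s l /\ length s = k /\ (NoDup l -> NoDup s).
Proof.
  revert k s; induction l as [|x l IH]; intros [|k] s H; simpl in H.
  - destruct H as [<-|[]]. repeat split; try (intros a []); intros; constructor.
  - destruct H.
  - destruct H as [<-|[]]. repeat split; try (intros a []); intros; constructor.
  - apply in_app_or in H. destruct H as [H|H].
    + apply in_map_iff in H. destruct H as [s' [<- H]]. apply IH in H. destruct H as [H1 [H2 H3]].
      repeat split.
      * intros a [<-|Ha]; [left; auto|right; auto].
      * simpl; lia.
      * intros Hn. inversion Hn; subst. constructor; auto.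
    + apply IH in H. destruct H as [H1 [H2 H3]]. repeat split; auto.
      * intros a Ha; right; auto.
      * intros Hn; inversion Hn; auto.
Qed.

Lemma choose_cnt (g : nat -> bool) I j : (j <= cnt g I)%nat -> exists s, In s (choose I j) /\ forall q, In q s -> g q = true.
Proof.
  revert j; induction I as [|x I IH]; intros [|j] H; simpl.
  - exists []. split; [left; auto|intros _ []].
  - unfold cnt in H; simpl in H; lia.
  - exists []. split; [left; auto|intros _ []].
  - rewrite cnt_cons in H. destruct (g x) eqn:G.
    + destruct (IH j) as [s [H1 H2]]; [lia|]. exists (x :: s). split.
      * apply in_or_app; left; apply in_map; auto.
      * intros q [<-|Hq]; auto.
    + destruct (IH (S j)) as [s [H1 H2]]; [lia|]. exists s. split; auto. apply in_or_app; right; auto.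
Qed.

Lemma filter_choose (f : nat -> bool) l : In (filter f l) (choose l (length (filter f l))).
Proof.
  induction l as [|x l IH]; simpl; auto.
  destruct (f x); simpl.
  - apply in_or_app; left; apply in_map; auto.
  - destruct (length (filter f l)) eqn:E; [|apply in_or_app; right; auto].
    destruct (filter f l); [left; auto|discriminate].
Qed.

Lemma bernoulli_nat M j : (M ^ S j + S j * M ^ j <= (S M) ^ S j)%nat.
Proof.
  induction j. simpl; lia.
  rewrite (Nat.pow_succ_r' M (S j)), (Nat.pow_succ_r' (S M) (S j)), (Nat.pow_succ_r' M j) in *.
  nia.
Qed.

Lemma binom_fact M j : (binom M j * fact j <= M ^ j)%nat.
Proof.
  revert j; induction M as [|M IH]; intros [|j]; simpl; try lia.
  pose proof (IH j). pose proof (IH (S j)). pose proof (bernoulli_nat M j).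
  change (fact (S j)) with (S j * fact j)%nat in *. change (S M ^ S j)%nat with (S M * S M ^ j)%nat in *. change (M ^ S j)%nat with (M * M ^ j)%nat in *. simpl fact. nia.
Qed.

Lemma binom_gt n k : (n < k)%nat -> binom n k = 0%nat.
Proof. revert k; induction n; intros [|k] H; simpl; try lia. rewrite !IHn by lia. auto. Qed.

Lemma binom_nn n : binom n n = 1%nat.
Proof. induction n; simpl; auto. rewrite IHn, binom_gt by lia. auto. Qed.

Lemma binom_sym_bound n k : (binom n k <= n ^ (n - k))%nat.
Proof.
  revert k; induction n as [|n IH]; intros [|k]; simpl; try lia.
  - pose proof (Nat.pow_le_mono_l 1 (S n) (S n)). rewrite Nat.pow_1_l in H. simpl in H. lia.
  - destruct (Nat.lt_trichotomy n k) as [Hl|[He|Hg]].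
    + rewrite !binom_gt by lia. lia.
    + subst. rewrite binom_nn, binom_gt by lia. rewrite Nat.sub_diag. simpl. lia.
    + pose proof (IH k) as H1. pose proof (IH (S k)) as H2.
      replace (n - k)%nat with (S (n - S k)) in * by lia.
      pose proof (bernoulli_nat n (n - S k)). 
      assert (1 <= S (n - S k))%nat by lia. nia.
Qed.

Definition lsum {X} (g : X -> R) (L : list X) : R := fold_right (fun x acc => g x + acc) 0 L.

Lemma lsum_le {X} (g h : X -> R) L : (forall x, In x L -> g x <= h x) -> lsum g L <= lsum h L.
Proof. induction L; simpl; intros; [lra|]. pose proof (H a (or_introl eq_refl)). assert (lsum g L <= lsum h L) by (apply IHL; auto). lra. Qed.

Lemma lsum_const {X} (c : R) (L : list X) : lsum (fun _ => c) L = INR (length L) * c.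
Proof. induction L; simpl; [lra|]. rewrite IHL. destruct (length L); simpl; lra. Qed.

Lemma lsum_nonneg {X} (g : X -> R) L : (forall x, In x L -> 0 <= g x) -> 0 <= lsum g L.
Proof. induction L; simpl; intros; [lra|]. pose proof (H a (or_introl eq_refl)). assert (0 <= lsum g L) by (apply IHL; auto). lra. Qed.

Lemma lsum_scal_r {X} (c : R) (g : X -> R) L : lsum (fun x => g x * c) L = lsum g L * c.
Proof. induction L; simpl; [lra|]. rewrite IHL. lra. Qed.

Lemma lsum_scal {X} (c : R) (g : X -> R) L : lsum (fun x => c * g x) L = c * lsum g L.
Proof. induction L; simpl; [lra|]. rewrite IHL. lra. Qed.

Lemma indic_true (P : Prop) : P -> indic P = 1.
Proof. intros H. unfold indic. destruct (excluded_middle_informative P); tauto. Qed.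
Lemma indic_false (P : Prop) : ~ P -> indic P = 0.
Proof. intros H. unfold indic. destruct (excluded_middle_informative P); tauto. Qed.
Lemma indic_ext (P Q : Prop) : (P <-> Q) -> indic P = indic Q.
Proof. intros H. unfold indic. destruct (excluded_middle_informative P), (excluded_middle_informative Q); tauto. Qed.
Lemma indic_bounds (P : Prop) : 0 <= indic P <= 1.
Proof. unfold indic. destruct (excluded_middle_informative P); lra. Qed.
Lemma indic_and (P Q : Prop) : indic (P /\ Q) = indic P * indic Q.
Proof. unfold indic. destruct (excluded_middle_informative P), (excluded_middle_informative Q), (excluded_middle_informative (P /\ Q)); try tauto; lra. Qed.
Lemma indic_not (P : Prop) : indic (~ P) = 1 - indic P.
Proof. unfold indic. destruct (excluded_middle_informative P), (excluded_middle_informative (~P)); try tauto; lra. Qed.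
Lemma indic_imp (P Q : Prop) : (P -> Q) -> indic P <= indic Q.
Proof. intros H. unfold indic. destruct (excluded_middle_informative P), (excluded_middle_informative Q); try tauto; lra. Qed.
Lemma indic_union {X} (P : X -> Prop) L : indic (exists x, In x L /\ P x) <= lsum (fun x => indic (P x)) L.
Proof.
  induction L as [|a L IH]; simpl.
  - rewrite indic_false; [lra|]. intros [x [[] _]].
  - pose proof (indic_bounds (P a)). pose proof (lsum_nonneg (fun x => indic (P x)) L (fun x _ => proj1 (indic_bounds (P x)))).
    unfold indic at 1. destruct (excluded_middle_informative _) as [[x [[<-|Hx] Px]]|Hn].
    + rewrite indic_true; auto; lra.
    + assert (indic (exists x, In x L /\ P x) = 1) by (apply indic_true; eauto). lra.
    + lra.
Qed.

Lemma expect_ext p m f g : (forall l, length l = m -> f l = g l) -> expect p m f = expect p m g.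
Proof.
  revert f g; induction m; intros f g H; simpl. apply H; auto.
  rewrite (IHm (fun l => f (true :: l)) (fun l => g (true :: l))), (IHm (fun l => f (false :: l)) (fun l => g (false :: l))); auto;
  intros; apply H; simpl; auto.
Qed.

Lemma expect_le p m f g : 0 <= p <= 1 -> (forall l, length l = m -> f l <= g l) -> expect p m f <= expect p m g.
Proof.
  intros Hp; revert f g; induction m; intros f g H; simpl. apply H; auto.
  assert (expect p m (fun l => f (true :: l)) <= expect p m (fun l => g (true :: l))) by (apply IHm; intros; apply H; simpl; auto).
  assert (expect p m (fun l => f (false :: l)) <= expect p m (fun l => g (false :: l))) by (apply IHm; intros; apply H; simpl; auto).
  nra.
Qed.

Lemma expect_const p m c : expect p m (fun _ => c) = c.
Proof. induction m; simpl; auto. rewrite IHm. ring. Qed.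

Lemma expect_plus p m f g : expect p m (fun l => f l + g l) = expect p m f + expect p m g.
Proof. revert f g; induction m; intros; simpl; auto. rewrite !IHm. ring. Qed.

Lemma expect_scal p m c f : expect p m (fun l => c * f l) = c * expect p m f.
Proof. revert f; induction m; intros; simpl; auto. rewrite !IHm. ring. Qed.

Lemma expect_lsum {X} p m (g : X -> list bool -> R) L :
  expect p m (fun l => lsum (fun x => g x l) L) = lsum (fun x => expect p m (g x)) L.
Proof.
  induction L; simpl. apply expect_const. rewrite expect_plus, IHL. auto.
Qed.

Lemma expect_nonneg p m f : 0 <= p <= 1 -> (forall l, length l = m -> 0 <= f l) -> 0 <= expect p m f.
Proof. intros. rewrite <- (expect_const p m 0). apply expect_le; auto. Qed.

Definition wt (p : R) (o : option bool) : R :=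
  match o with None => 1 | Some true => p | Some false => 1 - p end.
Fixpoint prodw (p : R) (m : nat) (c : nat -> option bool) : R :=
  match m with O => 1 | S m' => wt p (c O) * prodw p m' (fun i => c (S i)) end.
Definition sat (m : nat) (c : nat -> option bool) (l : list bool) : Prop :=
  forall i v, (i < m)%nat -> c i = Some v -> nth_error l i = Some v.

Lemma expect_sat p m c : expect p m (fun l => indic (sat m c l)) = prodw p m c.
Proof.
  revert c; induction m; intros c; simpl.
  - apply indic_true. intros i v H; lia.
  - assert (Hs : forall x l, sat (S m) c (x :: l) <-> ((forall v, c O = Some v -> x = v) /\ sat m (fun i => c (S i)) l)).
    { intros x l. split.
      - intros H. split. intros v Hv. specialize (H O v ltac:(lia) Hv). simpl in H. congruence.
        intros i v Hi Hv. apply (H (S i) v); auto; lia.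
      - intros [H1 H2] [|i] v Hi Hv; simpl. f_equal; apply H1; auto. apply H2; auto; lia. }
    rewrite (expect_ext p m _ (fun l => indic ((forall v, c O = Some v -> true = v) /\ sat m (fun i => c (S i)) l))) by (intros; apply indic_ext, Hs).
    rewrite (expect_ext p m (fun l => indic (sat (S m) c (false :: l))) (fun l => indic ((forall v, c O = Some v -> false = v) /\ sat m (fun i => c (S i)) l))) by (intros; apply indic_ext, Hs).
    rewrite <- IHm.
    destruct (c O) as [[|]|] eqn:E; simpl.
    + rewrite (expect_ext p m (fun l => indic ((forall v, Some true = Some v -> true = v) /\ sat m (fun i => c (S i)) l)) (fun l => indic (sat m (fun i => c (S i)) l))) by (intros; apply indic_ext; split; [tauto|intros; split; auto; congruence]).
      rewrite (expect_ext p m (fun l => indic ((forall v, Some true = Some v -> false = v) /\ sat m (fun i => c (S i)) l)) (fun l => 0 * indic (sat m (fun i => c (S i)) l))).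
      rewrite expect_scal. ring.
      intros. rewrite indic_false. ring. intros [Hc _]. specialize (Hc true eq_refl). discriminate.
    + rewrite (expect_ext p m (fun l => indic ((forall v, Some false = Some v -> false = v) /\ sat m (fun i => c (S i)) l)) (fun l => indic (sat m (fun i => c (S i)) l))) by (intros; apply indic_ext; split; [tauto|intros; split; auto; congruence]).
      rewrite (expect_ext p m (fun l => indic ((forall v, Some false = Some v -> true = v) /\ _)) (fun l => 0 * indic (sat m (fun i => c (S i)) l))).
      rewrite expect_scal. ring.
      intros. rewrite indic_false. ring. intros [Hc _]. specialize (Hc false eq_refl). discriminate.
    + rewrite (expect_ext p m (fun l => indic ((forall v, None = Some v -> true = v) /\ sat m (fun i => c (S i)) l)) (fun l => indic (sat m (fun i => c (S i)) l))) by (intros; apply indic_ext; split; [tauto|intros; split; auto; congruence]).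
      rewrite (expect_ext p m (fun l => indic ((forall v, None = Some v -> false = v) /\ sat m (fun i => c (S i)) l)) (fun l => indic (sat m (fun i => c (S i)) l))) by (intros; apply indic_ext; split; [tauto|intros; split; auto; congruence]).
      ring.
Qed.

Lemma prodw_ext p m c c' : (forall i, c i = c' i) -> prodw p m c = prodw p m c'.
Proof. revert c c'; induction m; intros; simpl; auto. rewrite H. f_equal. apply IHm. auto. Qed.

Lemma prodw_none p m : prodw p m (fun _ => None) = 1.
Proof. induction m; simpl; auto. rewrite IHm; simpl; ring. Qed.

Lemma prodw_upd p m c q v : (q < m)%nat -> c q = None ->
  prodw p m (fun i => if Nat.eqb i q then Some v else c i) = wt p (Some v) * prodw p m c.
Proof.
  revert c q; induction m; intros c q Hq Hc; simpl. lia.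
  destruct q as [|q]; simpl.
  - rewrite Hc. simpl. ring.
  - rewrite (IHm (fun i => c (S i)) q) by (auto; lia). simpl. ring.
Qed.

Definition cFS (F S : list nat) (i : nat) : option bool :=
  if in_dec Nat.eq_dec i F then Some false else if in_dec Nat.eq_dec i S then Some true else None.

Lemma prodw_FS p m F S : NoDup F -> NoDup S -> (forall q, In q F -> In q S -> False) ->
  (forall q, In q F \/ In q S -> q < m)%nat ->
  prodw p m (cFS F S) = (1 - p) ^ length F * p ^ length S.
Proof.
  revert S. induction F as [|x F IH]; intros S HF HS HD Hm.
  - simpl. induction S as [|y S IHS].
    + rewrite (prodw_ext p m _ (fun _ => None)) by (intros; reflexivity). rewrite prodw_none. simpl. ring.
    + inversion HS as [|y' S' Hy HS']; subst.
      assert (IH' : prodw p m (cFS [] S) = (1-p)^length (@nil nat) * p^length S).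
      { apply IHS; auto. intros qz [[]|Hq]; apply Hm; right; right; auto. }
      rewrite (prodw_ext p m _ (fun i => if Nat.eqb i y then Some true else cFS [] S i)).
      rewrite prodw_upd, IH'. simpl; ring.
      apply Hm; right; left; auto.
      unfold cFS; simpl. destruct (in_dec Nat.eq_dec y S); tauto.
      intros i; unfold cFS; destruct (Nat.eqb_spec i y); repeat destruct (in_dec _ _ _); simpl in *; subst; try tauto; try congruence; firstorder congruence.
  - inversion HF as [|x' F' Hx HF']; subst.
    assert (IH' : prodw p m (cFS F S) = (1-p)^length F * p^length S).
    { apply IH; auto. intros qz H1 H2. apply (HD qz); auto; right; auto.
      intros qz [Hq|Hq]; apply Hm; [left; right|right]; auto. }
    rewrite (prodw_ext p m _ (fun i => if Nat.eqb i x then Some false else cFS F S i)).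
    rewrite prodw_upd, IH'. simpl; ring.
    apply Hm; left; left; auto.
    unfold cFS. destruct (in_dec Nat.eq_dec x F); [tauto|]. destruct (in_dec Nat.eq_dec x S); auto.
    exfalso; apply (HD x); auto; left; auto.
    intros i; unfold cFS; destruct (Nat.eqb_spec i x); repeat destruct (in_dec _ _ _); simpl in *; subst; try tauto; try congruence; firstorder congruence.
Qed.

Lemma prob_FS p m F S : NoDup F -> NoDup S -> (forall q, In q F -> In q S -> False) ->
  (forall q, In q F \/ In q S -> q < m)%nat ->
  expect p m (fun l => indic ((forall q, In q F -> nth_error l q = Some false) /\ (forall q, In q S -> nth_error l q = Some true)))
  = (1 - p) ^ length F * p ^ length S.
Proof.
  intros HF HS HD Hm. rewrite <- (prodw_FS p m F S) by auto. rewrite <- (expect_sat p m).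
  apply expect_ext. intros l Hl. apply indic_ext. unfold sat, cFS. split.
  - intros [H1 H2] i v Hi. destruct (in_dec Nat.eq_dec i F). intros E; inversion E; subst; auto.
    destruct (in_dec Nat.eq_dec i S). intros E; inversion E; subst; auto. discriminate.
  - intros H. split; intros q Hq.
    + apply H. apply Hm; auto. destruct (in_dec Nat.eq_dec q F); tauto.
    + apply H. apply Hm; auto. destruct (in_dec Nat.eq_dec q F). exfalso; apply (HD q); auto.
      destruct (in_dec Nat.eq_dec q S); tauto.
Qed.

Lemma edge3_perm n b3 x y z x' y' z' : Permutation [x;y;z] [x';y';z'] -> edge3 n b3 x y z -> edge3 n b3 x' y' z'.
Proof.
  intros HP [k [i [j [l [H1 [H2 H3]]]]]]. exists k, i, j, l. repeat split; auto.
  eapply Permutation_trans; [apply Permutation_sym, HP|auto].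
Qed.

Lemma new_edges n b2 b3 (Yt Dt : nat -> Prop) w (Hw : Yt w) (N0 : list nat) :
  NoDup N0 -> (forall u, In u N0 -> newly n b2 b3 Yt Dt w u) ->
  exists E2n E3n, NoDup E2n /\ NoDup E3n /\ (length E2n + length E3n = length N0)%nat /\
   (forall q, In q E2n -> nth_error b2 q = Some true /\ exists i j u, nth_error (pairs n) q = Some (i, j) /\
       In u N0 /\ ((w = i /\ u = j) \/ (w = j /\ u = i))) /\
   (forall q, In q E3n -> nth_error b3 q = Some true /\ exists i j l u x, nth_error (triples n) q = Some (i, j, l) /\
       In u N0 /\ Dt x /\ Permutation [w;u;x] [i;j;l]).
Proof.
  induction N0 as [|u N0 IH]; intros HN HNW.
  - exists [], []. split; [constructor|]. split; [constructor|]. split; [reflexivity|]. split; intros q [].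
  - inversion HN as [|u' N0' Hu HN']; subst.
    destruct IH as [E2n [E3n [H1 [H2 [H3 [H4 H5]]]]]]; auto. intros; apply HNW; right; auto.
    assert (Hnu : newly n b2 b3 Yt Dt w u) by (apply HNW; left; auto).
    destruct Hnu as [Hun [HnY [HnD [He2|[x [Hx He3]]]]]].
    + destruct He2 as [q [i [j [Hq1 [Hq2 Hq3]]]]].
      exists (q :: E2n), E3n. refine (conj _ (conj H2 (conj _ (conj _ _)))).
      * constructor; auto. intros Hin. apply H4 in Hin. destruct Hin as [_ [i' [j' [u0 [E [Hu0 Hw0]]]]]].
        rewrite Hq1 in E. inversion E; subst i' j'.
        apply nth_error_In, in_pairs in Hq1.
        assert (u <> w) by (intro; subst; tauto).
        assert (u0 <> w) by (intro Heq; subst u0; assert (Hn : newly n b2 b3 Yt Dt w w) by (apply HNW; right; auto); destruct Hn as [_ [? _]]; tauto).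
        assert (u0 <> u) by (intro; subst; tauto). lia.
      * simpl; lia.
      * intros q' [<-|Hq'].
        -- split; auto. exists i, j, u. split; auto. split; auto. left; auto.
        -- destruct (H4 q' Hq') as [? [i' [j' [u0 [? [? ?]]]]]]. split; auto. exists i', j', u0. split; auto. split; auto. right; auto.
      * intros q' Hq'. destruct (H5 q' Hq') as [? [i' [j' [l' [u0 [x0 [? [? ?]]]]]]]]. split; auto.
        exists i', j', l', u0, x0. split; auto. split; [right; auto|tauto].
    + destruct He3 as [q [i [j [l [Hq1 [Hq2 Hq3]]]]]].
      exists E2n, (q :: E3n). refine (conj H1 (conj _ (conj _ (conj _ _)))).
      * constructor; auto. intros Hin. apply H5 in Hin. destruct Hin as [_ [i' [j' [l' [u0 [x0 [E [Hu0 [Hx0 HP]]]]]]]]].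
        rewrite Hq1 in E. inversion E; subst i' j' l'.
        assert (HP2 : Permutation [w;u;x] [w;u0;x0]) by (eapply Permutation_trans; [apply Hq3|apply Permutation_sym, HP]).
        apply Permutation_cons_inv in HP2. assert (Hin : In u [u0;x0]) by (eapply Permutation_in; [apply HP2|left; auto]).
        destruct Hin as [->|[->|[]]]; tauto.
      * simpl; lia.
      * intros q' Hq'. destruct (H4 q' Hq') as [? [i' [j' [u0 [? [? ?]]]]]]. split; auto. exists i', j', u0. split; auto. split; [right; auto|auto].
      * intros q' [<-|Hq'].
        -- split; auto. exists i, j, l, u, x. split; auto. split; [left; auto|auto].
        -- destruct (H5 q' Hq') as [? [i' [j' [l' [u0 [x0 [? [? ?]]]]]]]]. split; auto. exists i', j', l', u0, x0. split; auto. split; [right; auto|tauto].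
Qed.

Record Inv (n : nat) (b2 b3 : list bool) (Yt Dt : nat -> Prop) (t : nat) (Sl Wl E2 E3 : list nat) : Prop := mkInv {
  iD : forall u, Dt u <-> In u Wl;
  iY : forall u, Yt u <-> In u Sl /\ ~ In u Wl;
  iWS : incl Wl Sl;
  iNS : NoDup Sl;
  iNW : NoDup Wl;
  iLen : length Wl = t;
  iLt : forall u, In u Sl -> (u < n)%nat;
  iE2N : NoDup E2;
  iE3N : NoDup E3;
  iELen : (length E2 + length E3 + 1 = length Sl)%nat;
  iE2 : forall q, In q E2 -> nth_error b2 q = Some true /\ exists i j, nth_error (pairs n) q = Some (i, j) /\ In i Sl /\ In j Sl;
  iE3 : forall q, In q E3 -> nth_error b3 q = Some true /\ exists i j l, nth_error (triples n) q = Some (i, j, l) /\ In i Sl /\ In j Sl /\ In l Sl;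
  iC2 : forall w u, In w Wl -> (u < n)%nat -> edge2 n b2 w u -> In u Sl;
  iC3 : forall a b u, In a Wl -> In b Wl -> a <> b -> (u < n)%nat -> edge3 n b3 a b u -> In u Sl
}.

Lemma inv_step n b2 b3 Yt Dt Yt' Dt' t Sl Wl E2 E3 w :
  Inv n b2 b3 Yt Dt t Sl Wl E2 E3 -> Yt w ->
  (forall u, Yt' u <-> ((Yt u \/ newly n b2 b3 Yt Dt w u) /\ u <> w)) ->
  (forall u, Dt' u <-> (Dt u \/ u = w)) ->
  exists Sl' Wl' E2' E3', Inv n b2 b3 Yt' Dt' (S t) Sl' Wl' E2' E3'.
Proof.
  intros I Hw HY' HD'.
  set (NW := fun u => newly n b2 b3 Yt Dt w u).
  set (N := filter (fun u => if excluded_middle_informative (NW u) then true else false) (seq 0 n)).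
  assert (HN : forall u, In u N <-> NW u).
  { intros u. unfold N. rewrite filter_In, in_seq. destruct (excluded_middle_informative (NW u)) as [h|h]; split; try tauto.
    - intros; split; auto. destruct h; lia.
    - intros [_ ?]; discriminate. }
  assert (HwS : In w Sl /\ ~ In w Wl) by (apply (iY _ _ _ _ _ _ _ _ _ _ I); auto).
  assert (HNS : forall u, In u N -> ~ In u Sl).
  { intros u Hu HuS. apply HN in Hu. destruct Hu as [_ [HnY [HnD _]]].
    destruct (in_dec Nat.eq_dec u Wl). apply HnD, (iD _ _ _ _ _ _ _ _ _ _ I); auto.
    apply HnY, (iY _ _ _ _ _ _ _ _ _ _ I); auto. }
  assert (HNw : forall u, In u N -> u <> w) by (intros u Hu ->; apply (HNS w); tauto).
  destruct (new_edges n b2 b3 Yt Dt w Hw N) as [E2n [E3n [H1 [H2 [H3 [H4 H5]]]]]].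
  { apply NoDup_filter, seq_NoDup. }
  { intros u Hu; apply HN; auto. }
  destruct I.
  exists (Sl ++ N), (Wl ++ [w]), (E2 ++ E2n), (E3 ++ E3n). constructor.
  - intros u. rewrite HD', iD0, in_app_iff. simpl. intuition.
  - intros u. rewrite HY', iY0, !in_app_iff, HN. simpl. split.
    + intros [[[A1 A2]|A] B].
      * split; [left; auto|]. intros [C|[C|[]]]; auto.
      * assert (HuN : In u N) by (apply HN; auto). split; [right; auto|]. intros [C|[C|[]]].
        apply (HNS u); auto. apply B; auto.
    + intros [[A|A] B]; split; intuition.
  - intros u. rewrite !in_app_iff. intros [A|[<-|[]]]; left; auto. tauto.
  - apply NoDup_app; auto. apply NoDup_filter, seq_NoDup. intros a Ha Hb. apply (HNS a); auto.
  - apply NoDup_app; auto. repeat constructor; auto. intros a Ha [<-|[]]. tauto.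
  - rewrite length_app; simpl. lia.
  - intros u. rewrite in_app_iff. intros [A|A]; auto. apply HN in A. destruct A; auto.
  - apply NoDup_app; auto. intros q A B. destruct (iE4 q A) as [_ [i [j [E [Ei Ej]]]]].
    destruct (H4 q B) as [_ [i' [j' [u [E' [Hu Hw']]]]]]. rewrite E in E'. inversion E'; subst.
    apply (HNS u Hu). destruct Hw' as [[_ ->]|[_ ->]]; auto.
  - apply NoDup_app; auto. intros q A B. destruct (iE5 q A) as [_ [i [j [l [E [Ei [Ej El]]]]]]].
    destruct (H5 q B) as [_ [i' [j' [l' [u [x [E' [Hu [Hx HP]]]]]]]]]. rewrite E in E'. inversion E'; subst.
    apply (HNS u Hu). assert (In u [i';j';l']) by (eapply Permutation_in; [apply HP|right; left; auto]).
    destruct H as [<-|[<-|[<-|[]]]]; auto.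
  - rewrite !length_app. lia.
  - intros q. rewrite in_app_iff. intros [A|A].
    + destruct (iE4 q A) as [? [i [j [? [? ?]]]]]. split; auto. exists i, j. rewrite !in_app_iff. auto.
    + destruct (H4 q A) as [? [i [j [u [? [Hu Hw']]]]]]. split; auto. exists i, j. rewrite !in_app_iff.
      split; auto. destruct Hw' as [[<- <-]|[<- <-]]; tauto.
  - intros q. rewrite in_app_iff. intros [A|A].
    + destruct (iE5 q A) as [? [i [j [l [? [? [? ?]]]]]]]. split; auto. exists i, j, l. rewrite !in_app_iff. auto.
    + destruct (H5 q A) as [? [i [j [l [u [x [? [Hu [Hx HP]]]]]]]]]. split; auto. exists i, j, l.
      assert (HxS : In x Sl) by (apply iWS0, iD0; auto).
      assert (Hall : forall y, In y [i;j;l] -> In y (Sl ++ N)).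
      { intros y Hy. apply (Permutation_in y (Permutation_sym HP)) in Hy. rewrite in_app_iff.
        destruct Hy as [<-|[<-|[<-|[]]]]; tauto. }
      split; auto. split; [apply Hall; simpl; auto|]. split; apply Hall; simpl; auto.
  - intros w' u Hw' Hu He. rewrite in_app_iff in *. destruct Hw' as [Hw'|[<-|[]]].
    + left. eapply iC4; eauto.
    + destruct (in_dec Nat.eq_dec u Sl); [left; auto|right]. apply HN.
      split; auto. split. rewrite iY0; tauto. split. rewrite iD0. intro; apply n0; auto.
      left; auto.
  - intros a b u Ha Hb Hab Hu He. rewrite in_app_iff in *. simpl in Ha, Hb.
    destruct (in_dec Nat.eq_dec u Sl) as [HuS|HuS]; [left; auto|].
    assert (HNu : forall x, In x Wl -> edge3 n b3 w u x -> In u N).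
    { intros x Hx Hex. apply HN. split; auto. split. rewrite iY0; tauto. split. rewrite iD0. intro; apply HuS; auto.
      right. exists x. split; auto. apply iD0; auto. }
    destruct Ha as [Ha|[Ha|[]]], Hb as [Hb|[Hb|[]]].
    + exfalso; apply HuS; apply (iC5 a b u Ha Hb Hab Hu He).
    + subst b. right. apply (HNu a Ha). eapply edge3_perm; [|apply He].
      apply perm_trans with [w;a;u]. apply perm_swap. apply perm_skip, perm_swap.
    + subst a. right. apply (HNu b Hb). eapply edge3_perm; [|apply He]. apply perm_skip, perm_swap.
    + subst; tauto.
Qed.

Lemma inv_all n b2 b3 v Y D T : propagation_run n b2 b3 v Y D T ->
  forall t, (t <= T)%nat -> exists Sl Wl E2 E3, Inv n b2 b3 (Y t) (D t) t Sl Wl E2 E3.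
Proof.
  intros [Hv [HY0 [HD0 [Hst HYT]]]]. induction t as [|t IH]; intros Ht.
  - exists [v], [], [], []. constructor; simpl; auto.
    all: try (intros; simpl in *; tauto).
    all: try (intros u; rewrite HY0; split; [intros ->; auto|intros [[->|[]] _]; auto]).
    all: try (intros u [<-|[]]; auto).
    all: try (repeat constructor; simpl; tauto).
    all: try (intros u; split; [apply HD0|intros []]).
  - destruct IH as [Sl [Wl [E2 [E3 I]]]]; [lia|].
    destruct (Hst t ltac:(lia)) as [w [Hw [HY' HD']]].
    eapply inv_step; eauto.
Qed.

Lemma run_extract n b2 b3 v Y D T : propagation_run n b2 b3 v Y D T ->
  exists W E2 E3, NoDup W /\ length W = T /\ (forall u, In u W -> (u < n)%nat) /\
   NoDup E2 /\ NoDup E3 /\ (length E2 + length E3 + 1 = T)%nat /\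
   (forall q, In q E2 -> nth_error b2 q = Some true /\ exists i j, nth_error (pairs n) q = Some (i, j) /\ In i W /\ In j W) /\
   (forall q, In q E3 -> nth_error b3 q = Some true /\ exists i j l, nth_error (triples n) q = Some (i, j, l) /\ In i W /\ In j W /\ In l W) /\
   (forall w u, In w W -> (u < n)%nat -> edge2 n b2 w u -> In u W) /\
   (forall a b u, In a W -> In b W -> a <> b -> (u < n)%nat -> edge3 n b3 a b u -> In u W).
Proof.
  intros Hr. destruct (inv_all n b2 b3 v Y D T Hr T (le_n T)) as [Sl [Wl [E2 [E3 I]]]].
  destruct Hr as [_ [_ [_ [_ HYT]]]]. destruct I.
  assert (HSW : forall u, In u Sl -> In u Wl).
  { intros u Hu. destruct (in_dec Nat.eq_dec u Wl); auto. exfalso; apply (HYT u), iY0; auto. }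
  assert (HL : length Sl = length Wl).
  { apply Nat.le_antisymm; apply NoDup_incl_length; auto. }
  exists Wl, E2, E3. split; auto. split; auto. split; [intros; apply iLt0; auto|].
  split; auto. split; auto. split; [lia|].
  split. { intros q Hq. destruct (iE4 q Hq) as [? [i [j [? [? ?]]]]]. split; auto. exists i, j. auto. }
  split. { intros q Hq. destruct (iE5 q Hq) as [? [i [j [l [? [? [? ?]]]]]]]. split; auto. exists i, j, l. auto 10. }
  split. { intros w u Hw Hu He; apply HSW; exact (iC4 w u Hw Hu He). }
  intros a b u Ha Hb Hab Hu He; apply HSW; exact (iC5 a b u Ha Hb Hab Hu He).
Qed.

Definition fC (C : list nat) (x : nat) : bool := if in_dec Nat.eq_dec x C then true else false.
Definition bit (b : list bool) (q : nat) : bool := nth q b false.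

Definition Gev (n : nat) (b2 b3 : list bool) (k : nat) (C : list nat) : Prop :=
  (forall q, In q (posn (cross (fC C)) (pairs n)) -> nth_error b2 q = Some false) /\
  (forall q, In q (posn (ex2 (fC C)) (triples n)) -> nth_error b3 q = Some false) /\
  (k - 1 <= cnt (bit b2) (posn (in2 (fC C)) (pairs n)) + cnt (bit b3) (posn (in3 (fC C)) (triples n)))%nat.

Lemma cnt_lower (g : nat -> bool) E I : NoDup E -> (forall q, In q E -> In q I /\ g q = true) -> (length E <= cnt g I)%nat.
Proof. intros HE H. unfold cnt. apply NoDup_incl_length; auto. intros q Hq. apply filter_In. apply H; auto. Qed.

Lemma nth_error_bool (b : list bool) q : (q < length b)%nat -> nth_error b q = Some true \/ nth_error b q = Some false.
Proof. intros H. destruct (nth_error b q) as [[|]|] eqn:E; auto. apply nth_error_None in E. lia. Qed.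

Lemma event_reduce n b2 b3 (K : R) :
  length b2 = length (pairs n) -> length b3 = length (triples n) ->
  (exists (v : nat) (Y D : nat -> nat -> Prop) (T : nat),
          propagation_run n b2 b3 v Y D T /\ K <= INR T /\ (T <= n - 1)%nat) ->
  exists k, In k (seq 0 n) /\ K <= INR k /\ exists C, In C (choose (seq 0 n) k) /\ Gev n b2 b3 k C.
Proof.
  intros Hl2 Hl3 [v [Y [D [T [Hr [HK HT]]]]]].
  assert (Hvn : (v < n)%nat) by (destruct Hr; auto).
  destruct (run_extract n b2 b3 v Y D T Hr) as [W [E2 [E3 [HW [HWl [HWn [HE2 [HE3 [HEl [HE2p [HE3p [HC2 HC3]]]]]]]]]]]].
  set (Cl := filter (fun x => if in_dec Nat.eq_dec x W then true else false) (seq 0 n)).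
  assert (HfC : forall x, fC Cl x = true <-> In x W).
  { intros x. unfold fC, Cl. destruct (in_dec _ _ _) as [h|h]; rewrite filter_In in *.
    - destruct h as [_ h]. destruct (in_dec _ _ _); [tauto|discriminate].
    - split; [discriminate|]. intros Hx. exfalso; apply h. split. apply in_seq. specialize (HWn x Hx). lia.
      destruct (in_dec _ _ _); tauto. }
  assert (HfC' : forall x, fC Cl x = false <-> ~ In x W).
  { intros x. rewrite <- HfC. destruct (fC Cl x); split; congruence. }
  assert (HClen : length Cl = T).
  { rewrite <- HWl. apply Nat.le_antisymm; apply NoDup_incl_length.
    - apply NoDup_filter, seq_NoDup.
    - intros x Hx. apply HfC. unfold fC. destruct (in_dec _ _ _); tauto.
    - auto.
    - intros x Hx. assert (fC Cl x = true) by (apply HfC; auto). unfold fC in H. destruct (in_dec _ _ _); [auto|discriminate]. }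
  exists T. split; [apply in_seq; lia|]. split; auto. exists Cl. split.
  { rewrite <- HClen. apply filter_choose. }
  split; [|split].
  - intros q Hq. apply in_posn in Hq. destruct Hq as [[i j] [Eq Hx]].
    assert (Hij : (i < j < n)%nat) by (apply nth_error_In, in_pairs in Eq; auto).
    assert (Hq : (q < length b2)%nat) by (rewrite Hl2; apply nth_error_Some; congruence).
    destruct (nth_error_bool b2 q Hq) as [Hb|Hb]; auto. exfalso.
    unfold cross in Hx; simpl in Hx.
    destruct (fC Cl i) eqn:Fi, (fC Cl j) eqn:Fj; simpl in Hx; try discriminate.
    + apply HfC in Fi. apply HfC' in Fj. apply Fj, (HC2 i j); auto. lia. exists q, i, j. auto.
    + apply HfC' in Fi. apply HfC in Fj. apply Fi, (HC2 j i); auto. lia. exists q, i, j. auto.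
  - intros q Hq. apply in_posn in Hq. destruct Hq as [[[i j] l] [Eq Hx]].
    assert (Hij : (i < j < l /\ l < n)%nat) by (apply nth_error_In, in_triples in Eq; auto).
    assert (Hq : (q < length b3)%nat) by (rewrite Hl3; apply nth_error_Some; congruence).
    destruct (nth_error_bool b3 q Hq) as [Hb|Hb]; auto. exfalso.
    unfold ex2 in Hx.
    destruct (fC Cl i) eqn:Fi, (fC Cl j) eqn:Fj, (fC Cl l) eqn:Fl; simpl in Hx; try discriminate.
    + apply HfC in Fi. apply HfC in Fj. apply HfC' in Fl. apply Fl, (HC3 i j l); auto. lia. lia.
      exists q, i, j, l. auto.
    + apply HfC in Fi. apply HfC' in Fj. apply HfC in Fl. apply Fj, (HC3 i l j); auto. lia. lia.
      exists q, i, j, l. repeat split; auto. apply perm_skip, perm_swap.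
    + apply HfC' in Fi. apply HfC in Fj. apply HfC in Fl. apply Fi, (HC3 j l i); auto. lia. lia.
      exists q, i, j, l. repeat split; auto. apply perm_trans with [j;i;l]. apply perm_skip, perm_swap. apply perm_swap.
  - assert (L2 : (length E2 <= cnt (bit b2) (posn (in2 (fC Cl)) (pairs n)))%nat).
    { apply cnt_lower; auto. intros q Hq. destruct (HE2p q Hq) as [Hb [i [j [Eq [Hi Hj]]]]]. split.
      - apply in_posn. exists (i, j). split; auto. unfold in2; simpl. apply HfC in Hi. apply HfC in Hj. rewrite Hi, Hj; auto.
      - unfold bit. apply nth_error_nth with (d := false) in Hb. auto. }
    assert (L3 : (length E3 <= cnt (bit b3) (posn (in3 (fC Cl)) (triples n)))%nat).
    { apply cnt_lower; auto. intros q Hq. destruct (HE3p q Hq) as [Hb [i [j [l [Eq [Hi [Hj Hk]]]]]]]. split.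
      - apply in_posn. exists (i, j, l). split; auto. unfold in3. apply HfC in Hi. apply HfC in Hj. apply HfC in Hk. rewrite Hi, Hj, Hk; auto.
      - unfold bit. apply nth_error_nth with (d := false) in Hb. auto. }
    lia.
Qed.

Lemma cnt_compl (f : nat -> bool) l : (cnt f l + cnt (nf f) l)%nat = length l.
Proof. induction l; simpl; auto. rewrite !cnt_cons. unfold nf at 1. destruct (f a); simpl; lia. Qed.

Lemma cnt_choose l k C : NoDup l -> In C (choose l k) -> cnt (fC C) l = k.
Proof.
  intros Hl HC. destruct (choose_prop l k C HC) as [Hi [Hk Hn]]. specialize (Hn Hl).
  unfold cnt. rewrite <- Hk. apply Nat.le_antisymm; apply NoDup_incl_length; auto.
  - apply NoDup_filter; auto.
  - intros x Hx. apply filter_In in Hx. destruct Hx as [_ Hx]. unfold fC in Hx. destruct (in_dec _ _ _); [auto|discriminate].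
  - intros x Hx. apply filter_In. split; auto. unfold fC. destruct (in_dec _ _ _); tauto.
Qed.

Lemma pow_exp_le p N : 0 <= p <= 1 -> (1 - p) ^ N <= exp (- p * INR N).
Proof.
  intros Hp. induction N. simpl. rewrite Rmult_0_r, exp_0. lra.
  rewrite S_INR. replace (- p * (INR N + 1)) with (- p + (- p * INR N)) by ring. rewrite exp_plus. simpl.
  apply Rmult_le_compat; try lra. apply pow_le; lra. pose proof (exp_ineq1_le (- p)). lra.
Qed.

Lemma lsum_ext {X} (g h : X -> R) L : (forall x, g x = h x) -> lsum g L = lsum h L.
Proof. intros H; induction L; simpl; auto. rewrite H, IHL; auto. Qed.

Lemma lsum_app {X} (g : X -> R) l1 l2 : lsum g (l1 ++ l2) = lsum g l1 + lsum g l2.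
Proof. induction l1; simpl; [lra|]. rewrite IHl1; lra. Qed.

Lemma lsum_seq_sum g m : lsum g (seq 0 (S m)) = sum_f_R0 g m.
Proof.
  induction m. simpl. lra. rewrite seq_S, lsum_app, IHm. simpl. lra.
Qed.

Lemma posn_lt {A} (f : A -> bool) L q : In q (posn f L) -> (q < length L)%nat.
Proof. intros H. apply in_posn in H. destruct H as [x [E _]]. apply nth_error_Some. congruence. Qed.

Lemma binom_real M j : INR (binom M j) <= INR M ^ j / INR (fact j).
Proof.
  pose proof (binom_fact M j) as H. apply le_INR in H. rewrite mult_INR, pow_INR in H.
  pose proof (INR_fact_lt_0 j). apply Rmult_le_reg_r with (INR (fact j)); auto.
  unfold Rdiv. rewrite Rmult_assoc, Rinv_l by lra. lra.
Qed.

Lemma prob_cl_cnt p m F I j : 0 <= p <= 1 -> NoDup F -> NoDup I -> (forall q, In q F -> In q I -> False) ->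
  (forall q, In q F \/ In q I -> q < m)%nat ->
  expect p m (fun b => indic ((forall q, In q F -> nth_error b q = Some false) /\ (j <= cnt (bit b) I)%nat))
  <= INR (binom (length I) j) * ((1 - p) ^ length F * p ^ j).
Proof.
  intros Hp HF HI HD Hm.
  eapply Rle_trans. apply expect_le with (g := fun b => lsum (fun s => indic ((forall q, In q F -> nth_error b q = Some false) /\ (forall q, In q s -> nth_error b q = Some true))) (choose I j)); auto.
  - intros b Hb. eapply Rle_trans; [|apply (indic_union (fun s => (forall q, In q F -> nth_error b q = Some false) /\ (forall q, In q s -> nth_error b q = Some true)))].
    apply indic_imp. intros [H1 H2]. destruct (choose_cnt (bit b) I j H2) as [s [Hs Hs']]. exists s. split; auto. split; auto.
    intros q Hq. destruct (choose_prop I j s Hs) as [Hi _]. specialize (Hs' q Hq). unfold bit in Hs'.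
    assert (q < length b)%nat by (rewrite Hb; apply Hm; right; auto).
    rewrite (nth_error_nth' b false H). congruence.
  - rewrite expect_lsum. rewrite <- choose_length, <- lsum_const. apply lsum_le. intros s Hs.
    destruct (choose_prop I j s Hs) as [Hi [Hl Hn]].
    rewrite prob_FS; auto. rewrite Hl. lra.
    intros q H1 H2. apply (HD q); auto.
    intros q [H|H]; apply Hm; auto.
Qed.

Lemma prob_G_split n p2 p3 (E : list bool -> list bool -> Prop) {X} (L : list X) g h :
  0 <= p2 <= 1 -> 0 <= p3 <= 1 ->
  (forall b2 b3, length b2 = length (pairs n) -> length b3 = length (triples n) -> indic (E b2 b3) <= lsum (fun x => g x b2 * h x b3) L) ->
  prob_G n p2 p3 E <= lsum (fun x => expect p2 (length (pairs n)) (g x) * expect p3 (length (triples n)) (h x)) L.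
Proof.
  intros Hp2 Hp3 H. unfold prob_G.
  eapply Rle_trans. apply expect_le; auto. intros b2 Hb2. apply expect_le; auto. intros b3 Hb3. apply H; auto.
  rewrite (expect_ext p2 _ _ (fun b2 => lsum (fun x => g x b2 * expect p3 (length (triples n)) (h x)) L)).
  rewrite expect_lsum. apply lsum_le. intros x _. rewrite (expect_ext p2 _ _ (fun b2 => expect p3 (length (triples n)) (h x) * g x b2)).
  rewrite expect_scal. lra. intros; lra.
  intros b2 _. rewrite expect_lsum. apply lsum_ext. intros x. apply expect_scal.
Qed.

Lemma sizes n k Cl : In Cl (choose (seq 0 n) k) ->
  (k <= n)%nat /\
  INR (length (posn (cross (fC Cl)) (pairs n))) = INR k * (INR n - INR k) /\
  INR (length (posn (ex2 (fC Cl)) (triples n))) = INR k * (INR k - 1) * (INR n - INR k) / 2 /\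
  INR (length (posn (in2 (fC Cl)) (pairs n))) <= INR k ^ 2 / 2 /\
  INR (length (posn (in3 (fC Cl)) (triples n))) <= INR k ^ 3 / 6.
Proof.
  intros HC. pose proof (cnt_choose (seq 0 n) k Cl (seq_NoDup _ _) HC) as Hc.
  pose proof (cnt_compl (fC Cl) (seq 0 n)) as Hd. rewrite length_seq in Hd.
  pose proof (count_all (fC Cl) n) as HH. cbv zeta in HH. destruct HH as [H1 [H2 [H3 H4]]].
  rewrite Hc in *. rewrite !posn_length.
  assert (Hdn : cnt (nf (fC Cl)) (seq 0 n) = (n - k)%nat) by lia.
  rewrite Hdn in *.
  split; [lia|].
  assert (Hk : INR (n - k) = INR n - INR k) by (rewrite minus_INR; auto; lia).
  split. { rewrite H1, mult_INR, Hk. auto. }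
  assert (E2 : INR 2 = 2) by (simpl; lra). assert (E3 : INR 3 = 3) by (simpl; lra). assert (E6 : INR 6 = 6) by (simpl; lra).
  split. { apply (f_equal INR) in H3. rewrite !plus_INR, !mult_INR, Hk, E2 in H3. lra. }
  split. { apply (f_equal INR) in H2. rewrite !plus_INR, !mult_INR, E2 in H2. pose proof (pos_INR k). simpl. lra. }
  { apply (f_equal INR) in H4. rewrite !plus_INR, !mult_INR, E6, E3, E2 in H4. pose proof (pos_INR k).
    assert (INR k = 0 \/ 1 <= INR k). { destruct k. left; auto. right. rewrite S_INR. pose proof (pos_INR k). lra. }
    destruct H0 as [H0|H0]. rewrite H0 in *. simpl. nra.
    assert (INR k * INR k >= INR k) by (clear -H0; nra). assert (INR k * INR k * INR k >= INR k * INR k) by (clear -H0; nra). simpl. lra. }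
Qed.

Lemma disj_posn {A} (f g : A -> bool) L : (forall x, f x = true -> g x = true -> False) ->
  forall q, In q (posn f L) -> In q (posn g L) -> False.
Proof.
  intros H q H1 H2. apply in_posn in H1. apply in_posn in H2. destruct H1 as [x [E1 F1]], H2 as [y [E2 F2]].
  rewrite E1 in E2. inversion E2; subst. eauto.
Qed.

Lemma binom_pow_le M Mb p j : 0 <= p -> INR M <= Mb -> INR (binom M j) * p ^ j <= (Mb * p) ^ j / INR (fact j).
Proof.
  intros Hp HM. eapply Rle_trans. apply Rmult_le_compat_r. apply pow_le; auto. apply binom_real.
  pose proof (INR_fact_lt_0 j). unfold Rdiv. rewrite Rpow_mult_distr.
  assert (INR M ^ j <= Mb ^ j) by (apply pow_incr; split; auto; apply pos_INR).
  assert (0 <= p ^ j) by (apply pow_le; auto). assert (0 < / INR (fact j)) by (apply Rinv_0_lt_compat; auto).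
  assert (INR M ^ j * p ^ j <= Mb ^ j * p ^ j) by (apply Rmult_le_compat_r; auto).
  replace (INR M ^ j * / INR (fact j) * p ^ j) with (INR M ^ j * p ^ j * / INR (fact j)) by ring.
  apply Rmult_le_compat_r; lra.
Qed.

Lemma binom_sum X Y m E :
  lsum (fun j => X ^ j / INR (fact j) * (Y ^ (m - j) / INR (fact (m - j)))) (seq 0 (S m)) * E
  = (X + Y) ^ m / INR (fact m) * E.
Proof.
  f_equal. rewrite lsum_seq_sum, binomial.
  replace (sum_f_R0 (fun i => C m i * X ^ i * Y ^ (m - i)) m / INR (fact m)) with (/ INR (fact m) * sum_f_R0 (fun i => C m i * X ^ i * Y ^ (m - i)) m) by (unfold Rdiv; ring).
  rewrite scal_sum.
  apply sum_eq. intros i Hi. unfold C. pose proof (INR_fact_lt_0 i). pose proof (INR_fact_lt_0 (m - i)). pose proof (INR_fact_lt_0 m).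
  field. lra.
Qed.

Lemma perC_small n k Cl p2 p3 : 0 <= p2 <= 1 -> 0 <= p3 <= 1 -> (1 <= k)%nat -> In Cl (choose (seq 0 n) k) ->
  prob_G n p2 p3 (fun b2 b3 => Gev n b2 b3 k Cl) <=
  (INR k ^ 2 / 2 * p2 + INR k ^ 3 / 6 * p3) ^ (k - 1) / INR (fact (k - 1)) *
  (exp (- p2 * (INR k * (INR n - INR k))) * exp (- p3 * (INR k * (INR k - 1) * (INR n - INR k) / 2))).
Proof.
  intros Hp2 Hp3 Hk HC.
  destruct (sizes n k Cl HC) as [Hkn [S1 [S2 [S3 S4]]]].
  set (f := fC Cl) in *.
  set (F2 := posn (cross f) (pairs n)) in *. set (I2 := posn (in2 f) (pairs n)) in *.
  set (F3 := posn (ex2 f) (triples n)) in *. set (I3 := posn (in3 f) (triples n)) in *.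
  set (X := INR k ^ 2 / 2 * p2). set (Y := INR k ^ 3 / 6 * p3).
  set (Ea := exp (- p2 * (INR k * (INR n - INR k)))). set (Eb := exp (- p3 * (INR k * (INR k - 1) * (INR n - INR k) / 2))).
  eapply Rle_trans.
  { apply (prob_G_split n p2 p3 _ (seq 0 k)
      (fun j b2 => indic ((forall q, In q F2 -> nth_error b2 q = Some false) /\ (j <= cnt (bit b2) I2)%nat))
      (fun j b3 => indic ((forall q, In q F3 -> nth_error b3 q = Some false) /\ (k - 1 - j <= cnt (bit b3) I3)%nat))); auto.
    intros b2 b3 _ _.
    rewrite (lsum_ext _ (fun j => indic (((forall q, In q F2 -> nth_error b2 q = Some false) /\ (j <= cnt (bit b2) I2)%nat) /\
          ((forall q, In q F3 -> nth_error b3 q = Some false) /\ (k - 1 - j <= cnt (bit b3) I3)%nat)))) by (intros; symmetry; apply indic_and).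
    eapply Rle_trans; [|apply (indic_union (fun j => ((forall q, In q F2 -> nth_error b2 q = Some false) /\ (j <= cnt (bit b2) I2)%nat) /\
          ((forall q, In q F3 -> nth_error b3 q = Some false) /\ (k - 1 - j <= cnt (bit b3) I3)%nat)))].
    apply indic_imp. intros [G1 [G2 G3]].
    exists (Nat.min (cnt (bit b2) I2) (k - 1)). split. apply in_seq; lia.
    unfold Gev in *. split; split; auto; unfold I2, I3, f in *; lia. }
  eapply Rle_trans.
  { apply lsum_le with (h := fun j => (X ^ j / INR (fact j) * Ea) * (Y ^ (k - 1 - j) / INR (fact (k - 1 - j)) * Eb)).
    intros j Hj. apply Rmult_le_compat.
    - apply expect_nonneg; auto. intros; apply indic_bounds.
    - apply expect_nonneg; auto. intros; apply indic_bounds.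
    - eapply Rle_trans. apply prob_cl_cnt; auto.
      + apply posn_nodup. + apply posn_nodup.
      + apply disj_posn. intros [i j'] A1 A2. unfold cross, in2 in *; simpl in *. destruct (f i), (f j'); simpl in *; discriminate.
      + intros q [H|H]; eapply posn_lt; eauto.
      + replace (INR (binom (length I2) j) * ((1 - p2) ^ length F2 * p2 ^ j)) with ((1 - p2) ^ length F2 * (INR (binom (length I2) j) * p2 ^ j)) by ring.
        rewrite (Rmult_comm (X ^ j / _) Ea). apply Rmult_le_compat.
        * apply pow_le; lra.
        * apply Rmult_le_pos; [apply pos_INR|apply pow_le; lra].
        * unfold Ea. rewrite <- S1. apply pow_exp_le; auto.
        * apply binom_pow_le; auto; lra.
    - eapply Rle_trans. apply prob_cl_cnt; auto.
      + apply posn_nodup. + apply posn_nodup.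
      + apply disj_posn. intros [[i j'] l] A1 A2. unfold ex2, in3 in *. destruct (f i), (f j'), (f l); simpl in *; discriminate.
      + intros q [H|H]; eapply posn_lt; eauto.
      + replace (INR (binom (length I3) (k - 1 - j)) * ((1 - p3) ^ length F3 * p3 ^ (k - 1 - j))) with ((1 - p3) ^ length F3 * (INR (binom (length I3) (k - 1 - j)) * p3 ^ (k - 1 - j))) by ring.
        rewrite (Rmult_comm (Y ^ (k - 1 - j) / _) Eb). apply Rmult_le_compat.
        * apply pow_le; lra.
        * apply Rmult_le_pos; [apply pos_INR|apply pow_le; lra].
        * unfold Eb. rewrite <- S2. apply pow_exp_le; auto.
        * apply binom_pow_le; auto; lra. }
  destruct k as [|m]; [lia|]. replace (S m - 1)%nat with m by lia.
  rewrite (lsum_ext _ (fun j => X ^ j / INR (fact j) * (Y ^ (m - j) / INR (fact (m - j))) * (Ea * Eb))).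
  rewrite (lsum_scal_r (Ea * Eb) (fun j => X ^ j / INR (fact j) * (Y ^ (m - j) / INR (fact (m - j))))). rewrite binom_sum. right; reflexivity.
  intros j. replace (S m - 1 - j)%nat with (m - j)%nat by lia. ring.
Qed.

Lemma perC_large n k Cl p2 p3 : 0 <= p2 <= 1 -> 0 <= p3 <= 1 -> In Cl (choose (seq 0 n) k) ->
  prob_G n p2 p3 (fun b2 b3 => Gev n b2 b3 k Cl) <=
  exp (- p3 * (INR k * (INR k - 1) * (INR n - INR k) / 2)).
Proof.
  intros Hp2 Hp3 HC.
  destruct (sizes n k Cl HC) as [Hkn [S1 [S2 [S3 S4]]]].
  set (F3 := posn (ex2 (fC Cl)) (triples n)) in *.
  eapply Rle_trans.
  { apply (prob_G_split n p2 p3 _ [tt] (fun _ _ => 1) (fun _ b3 => indic (forall q, In q F3 -> nth_error b3 q = Some false))); auto.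
    intros b2 b3 _ _. simpl. rewrite Rmult_1_l, Rplus_0_r. apply indic_imp. intros [_ [G _]]. auto. }
  simpl. rewrite expect_const, Rmult_1_l, Rplus_0_r.
  eapply Rle_trans; [|rewrite <- S2; apply (pow_exp_le p3 (length F3)); auto].
  pose proof (prob_FS p3 (length (triples n)) F3 [] (posn_nodup _ _) (NoDup_nil _) (fun q _ H => H)) as P.
  simpl in P. rewrite Rmult_1_r in P. rewrite <- P.
  - right. apply expect_ext. intros l _. apply indic_ext. tauto.
  - intros q [H|[]]; eapply posn_lt; eauto.
Qed.

Lemma exp_pow_nat x k : exp x ^ k = exp (x * INR k).
Proof.
  induction k. simpl. rewrite Rmult_0_r, exp_0. auto.
  rewrite S_INR. simpl. rewrite IHk, <- exp_plus. f_equal. ring.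
Qed.

Lemma stirling k : INR k ^ k <= exp (INR k) * INR (fact k).
Proof.
  induction k. simpl. rewrite exp_0. lra.
  rewrite S_INR. simpl pow. change (fact (S k)) with (S k * fact k)%nat. rewrite mult_INR, S_INR.
  destruct k.
  - simpl. replace (0 + 1) with 1 by ring. pose proof (exp_ineq1_le 1). lra.
  - set (x := INR (S k)) in *. assert (Hx : 1 <= x) by (unfold x; rewrite S_INR; pose proof (pos_INR k); lra).
    assert (H1 : x + 1 <= x * exp (/ x)).
    { pose proof (exp_ineq1_le (/ x)). assert (x * (1 + / x) = x + 1) by (field; lra). nra. }
    assert (H2 : (x + 1) ^ S k <= (x * exp (/ x)) ^ S k) by (apply pow_incr; lra).
    rewrite Rpow_mult_distr, exp_pow_nat in H2. fold x in H2.
    replace (/ x * x) with 1 in H2 by (field; lra).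
    rewrite exp_plus. 
    assert (0 < exp 1) by apply exp_pos. assert (0 <= x ^ S k) by (apply pow_le; lra).
    assert (x ^ S k * exp 1 <= exp x * INR (fact (S k)) * exp 1) by (apply Rmult_le_compat_r; lra).
    nra.
Qed.

Lemma exp_ge_1 x : 1 <= x -> x <= exp (x - 1).
Proof. intros. pose proof (exp_ineq1_le (x - 1)). lra. Qed.

Lemma exp_mono x y : x <= y -> exp x <= exp y.
Proof. intros [H|H]. left; apply exp_increasing; auto. subst; lra. Qed.

Lemma expo_ineq L kk a q d :
  0 < L -> 1 <= kk -> 0 < a <= 1 -> 0 < q <= 1 -> 0 <= d <= 1/2 -> 18 <= q * kk -> L <= kk -> q * kk * d <= 1 ->
  L + 2 * kk + (a / 2 + q * kk / 6 - 1) * kk - a * kk * (1 - d) - q * kk * (kk - 1) * (1 - d) / 2 <= -2 * L.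
Proof.
  intros HL Hk Ha Hq Hd H18 HLk Hqd.
  assert (P1 : (q * kk) * kk >= 18 * kk) by nra.
  assert (P2 : a * kk * d <= kk / 2) by nra.
  assert (P3 : (q * kk * d) * kk <= kk) by nra.
  assert (P4 : q * kk <= kk) by nra.
  assert (P5 : 0 <= q * kk * d) by nra.
  assert (P6 : 0 <= a * kk) by nra.
  nra.
Qed.

Lemma small_term n k a r : (1 <= k)%nat -> (k <= n)%nat -> 1 < INR n -> 0 < a <= 1 -> 0 < r ->
  18 * ln (INR n) <= r * INR k -> ln (INR n) <= INR k -> INR k <= INR n / 2 -> r <= ln (INR n) ->
  r * INR k ^ 2 <= ln (INR n) * INR n ->
  INR (binom n k) * ((INR k ^ 2 / 2 * (a / INR n) + INR k ^ 3 / 6 * (r / (INR n * ln (INR n)))) ^ (k - 1) / INR (fact (k - 1)) *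
    (exp (- (a / INR n) * (INR k * (INR n - INR k))) * exp (- (r / (INR n * ln (INR n))) * (INR k * (INR k - 1) * (INR n - INR k) / 2))))
  <= exp (-2 * ln (INR n)).
Proof.
  intros Hk1 Hkn Hn Ha Hr H18 HLk Hd Hq Hqd.
  set (nn := INR n) in *. set (L := ln nn) in *.
  assert (HL : 0 < L) by (unfold L; rewrite <- ln_1; apply ln_increasing; lra).
  destruct k as [|m]; [lia|]. replace (S m - 1)%nat with m by lia.
  set (kk := INR (S m)) in *.
  assert (Hkk : 1 <= kk) by (unfold kk; rewrite S_INR; pose proof (pos_INR m); lra).
  set (z := a / 2 + r / L * kk / 6).
  assert (Hz : 3 <= z). { unfold z. assert (r / L * kk >= 18). { unfold Rdiv. apply Rle_ge. apply Rmult_le_reg_r with L; auto.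
      replace (r * / L * kk * L) with (r * kk) by (field; lra). lra. } lra. }
  assert (E1 : kk ^ 2 / 2 * (a / nn) + kk ^ 3 / 6 * (r / (nn * L)) = kk ^ 2 / nn * z) by (unfold z; field; lra).
  rewrite E1, Rpow_mult_distr.
  set (Ea := exp (- (a / nn) * (kk * (nn - kk)))). set (Eb := exp (- (r / (nn * L)) * (kk * (kk - 1) * (nn - kk) / 2))).
  pose proof (binom_real n (S m)) as Hb. fold nn kk in Hb.
  pose proof (stirling (S m)) as Hs. fold kk in Hs.
  assert (Hfm : INR (fact (S m)) = kk * INR (fact m)) by (unfold kk; change (fact (S m)) with (S m * fact m)%nat; rewrite mult_INR; auto).
  pose proof (INR_fact_lt_0 m) as Hf0.
  set (u := kk ^ S m / INR (fact (S m))).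
  assert (Hu : u <= exp kk). { unfold u. rewrite Hfm. apply Rmult_le_reg_r with (kk * INR (fact m)). nra.
    unfold Rdiv. rewrite Rmult_assoc, Rinv_l by nra. rewrite Rmult_1_r, <- Hfm. lra. }
  assert (Hu0 : 0 <= u). { unfold u. apply Rmult_le_pos. apply pow_le; lra. left; apply Rinv_0_lt_compat; nra. }
  assert (Hzm : z ^ m <= exp ((z - 1) * kk)).
  { eapply Rle_trans with (z ^ S m). simpl. assert (0 <= z ^ m) by (apply pow_le; lra). nra.
    unfold kk. rewrite <- exp_pow_nat. apply pow_incr. split. lra. apply exp_ge_1. lra. }
  assert (Hzm0 : 0 <= z ^ m) by (apply pow_le; lra).
  assert (HEa : 0 < Ea) by apply exp_pos. assert (HEb : 0 < Eb) by apply exp_pos.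
  assert (Hnn : 0 < nn) by lra.
  assert (Iden : nn ^ S m / INR (fact (S m)) * ((kk ^ 2) ^ m / nn ^ m * z ^ m / INR (fact m)) = nn * (u * u) / kk * z ^ m).
  { unfold u. rewrite Hfm. rewrite <- pow_mult. replace (2 * m)%nat with (m + m)%nat by lia. rewrite pow_add, <- (tech_pow_Rmult nn m), <- (tech_pow_Rmult kk m).
    assert (0 < nn ^ m) by (apply pow_lt; lra). field. repeat split; nra. }
  assert (Hdiv : (kk ^ 2 / nn) ^ m = (kk ^ 2) ^ m / nn ^ m) by (unfold Rdiv; rewrite Rpow_mult_distr, pow_inv; auto).
  eapply Rle_trans.
  { apply Rmult_le_compat_r; [|apply Hb].
    assert (0 <= (kk ^ 2 / nn) ^ m) by (apply pow_le; apply Rmult_le_pos; [apply pow_le; lra|left; apply Rinv_0_lt_compat; lra]).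
    assert (0 <= / INR (fact m)) by (left; apply Rinv_0_lt_compat; auto).
    unfold Rdiv. repeat apply Rmult_le_pos; auto; lra. }
  rewrite Hdiv.
  replace (nn ^ S m / INR (fact (S m)) * ((kk ^ 2) ^ m / nn ^ m * z ^ m / INR (fact m) * (Ea * Eb)))
    with ((nn ^ S m / INR (fact (S m)) * ((kk ^ 2) ^ m / nn ^ m * z ^ m / INR (fact m))) * (Ea * Eb)) by ring.
  rewrite Iden.
  assert (Hukk : u * u / kk <= exp kk * exp kk).
  { apply Rle_trans with (u * u). unfold Rdiv. rewrite <- (Rmult_1_r (u * u)) at 2. apply Rmult_le_compat_l. nra.
    rewrite <- Rinv_1. apply Rinv_le_contravar; lra. apply Rmult_le_compat; auto. }
  apply Rle_trans with (nn * (exp kk * exp kk) * exp ((z - 1) * kk) * (Ea * Eb)).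
  { replace (nn * (u * u) / kk * z ^ m * (Ea * Eb)) with (nn * (u * u / kk) * z ^ m * (Ea * Eb)) by (field; lra).
    apply Rmult_le_compat_r. nra. apply Rmult_le_compat; try nra.
    apply Rmult_le_pos; [lra|]. apply Rmult_le_pos; [nra|left; apply Rinv_0_lt_compat; lra]. }
  replace nn with (exp L) at 1 by (unfold L; apply exp_ln; lra).
  unfold Ea, Eb. rewrite <- !exp_plus. apply exp_mono.
  pose proof (expo_ineq L kk a (r / L) (kk / nn) HL Hkk Ha) as Hex.
  assert (Hq1 : 0 < r / L <= 1). { split. apply Rdiv_lt_0_compat; auto. apply Rmult_le_reg_r with L; auto. unfold Rdiv. rewrite Rmult_assoc, Rinv_l by lra. lra. }
  assert (Hd1 : 0 <= kk / nn <= 1 / 2). { split. apply Rmult_le_pos; [lra|left; apply Rinv_0_lt_compat; lra].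
    apply Rmult_le_reg_r with nn; auto. unfold Rdiv. rewrite Rmult_assoc, Rinv_l by lra. lra. }
  assert (H18' : 18 <= r / L * kk). { apply Rmult_le_reg_r with L; auto. replace (r / L * kk * L) with (r * kk) by (field; lra). lra. }
  assert (Hqd' : r / L * kk * (kk / nn) <= 1). { apply Rmult_le_reg_r with (L * nn). nra.
    replace (r / L * kk * (kk / nn) * (L * nn)) with (r * kk ^ 2) by (field; lra). lra. }
  specialize (Hex Hq1 Hd1 H18' HLk Hqd').
  eapply Rle_trans; [|apply Hex]. right. unfold z. field. lra.
Qed.

Lemma binom_le_pow n k : INR (binom n k) <= INR n ^ k.
Proof.
  eapply Rle_trans. apply binom_real. pose proof (INR_fact_lt_0 k).
  assert (1 <= INR (fact k)) by (apply (le_INR 1); apply lt_O_fact).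
  assert (0 <= INR n ^ k) by (apply pow_le, pos_INR).
  unfold Rdiv. rewrite <- (Rmult_1_r (INR n ^ k)) at 2. apply Rmult_le_compat_l; auto.
  rewrite <- Rinv_1. apply Rinv_le_contravar; lra.
Qed.

Lemma binom_sym_real n k : INR (binom n k) <= INR n ^ (n - k).
Proof. rewrite <- pow_INR. apply le_INR, binom_sym_bound. Qed.

Lemma large1 n k r : (2 <= k)%nat -> 1 < INR n -> 0 < r -> INR k <= INR n / 2 ->
  8 * ln (INR n) ^ 2 <= r * (INR k - 1) ->
  INR (binom n k) * exp (- (r / (INR n * ln (INR n))) * (INR k * (INR k - 1) * (INR n - INR k) / 2)) <= exp (-2 * ln (INR n)).
Proof.
  intros Hk Hn Hr Hd H8. set (nn := INR n) in *. set (L := ln nn) in *. set (kk := INR k) in *.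
  assert (HL : 0 < L) by (unfold L; rewrite <- ln_1; apply ln_increasing; lra).
  assert (Hkk : 2 <= kk) by (unfold kk; apply (le_INR 2) in Hk; simpl in Hk; lra).
  eapply Rle_trans. apply Rmult_le_compat_r. left; apply exp_pos. apply binom_le_pow. fold nn.
  replace (nn ^ k) with (exp L ^ k) by (unfold L; rewrite exp_ln; auto; lra).
  rewrite exp_pow_nat, <- exp_plus. apply exp_mono. fold kk.
  set (t := (nn - kk) / nn).
  assert (Ht : 1 / 2 <= t). { assert (nn * t = nn - kk) by (unfold t; field; lra). nra. }
  replace (- (r / (nn * L)) * (kk * (kk - 1) * (nn - kk) / 2)) with (- ((r * (kk - 1)) * kk * t / (2 * L))) by (unfold t; field; lra).
  assert (A : (r * (kk - 1)) * kk * t >= 8 * L ^ 2 * kk * (1/2)).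
  { assert (r * (kk - 1) * kk >= 8 * L ^ 2 * kk) by nra. assert (0 <= 8 * L^2 * kk) by nra. nra. }
  assert (B : (r * (kk - 1)) * kk * t / (2 * L) >= 2 * L * kk).
  { assert (E : (r * (kk - 1)) * kk * t / (2 * L) * (2 * L) = (r * (kk - 1)) * kk * t) by (field; lra).
    set (y := (r * (kk - 1)) * kk * t / (2 * L)) in *. nra. }
  nra.
Qed.

Lemma large2 n k r : (1 <= k)%nat -> (k <= n - 1)%nat -> 2 <= INR n -> 0 < r -> INR n / 2 <= INR k ->
  24 * ln (INR n) ^ 2 <= r * (INR n - 2) ->
  INR (binom n k) * exp (- (r / (INR n * ln (INR n))) * (INR k * (INR k - 1) * (INR n - INR k) / 2)) <= exp (-2 * ln (INR n)).
Proof.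
  intros Hk Hkn Hn Hr Hd H24. set (nn := INR n) in *. set (L := ln nn) in *. set (kk := INR k) in *.
  assert (HL : 0 < L) by (unfold L; rewrite <- ln_1; apply ln_increasing; lra).
  assert (Hj : 1 <= nn - kk). { unfold nn, kk. rewrite <- minus_INR by lia. apply (le_INR 1). lia. }
  eapply Rle_trans. apply Rmult_le_compat_r. left; apply exp_pos. apply binom_sym_real.
  fold nn. replace (nn ^ (n - k)) with (exp L ^ (n - k)) by (unfold L; rewrite exp_ln; auto; lra).
  rewrite exp_pow_nat, <- exp_plus. apply exp_mono. rewrite minus_INR by lia. fold nn kk.
  assert (A : kk * (kk - 1) >= nn * (nn - 2) / 4) by nra.
  set (j := nn - kk) in *. clearbody j L nn kk.
  replace (- (r / (nn * L)) * (kk * (kk - 1) * j / 2)) with (- (r * (kk * (kk - 1)) * j / (2 * nn * L))) by (field; lra).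
  assert (B : r * (kk * (kk - 1)) * j / (2 * nn * L) >= 3 * L * j).
  { assert (E : r * (kk * (kk - 1)) * j / (2 * nn * L) * (2 * nn * L) = r * (kk * (kk - 1)) * j) by (field; lra).
    assert (r * (kk * (kk - 1)) >= r * (nn * (nn - 2) / 4)) by nra.
    assert (r * (kk * (kk - 1)) * j >= r * (nn * (nn - 2) / 4) * j) by nra.
    assert (r * (nn * (nn - 2) / 4) * j >= 24 * L ^ 2 * nn / 4 * j).
    { apply Rle_ge. replace (r * (nn * (nn - 2) / 4) * j) with ((r * (nn - 2)) * (nn * j / 4)) by field.
      replace (24 * L ^ 2 * nn / 4 * j) with ((24 * L ^ 2) * (nn * j / 4)) by field. apply Rmult_le_compat_r; nra. }
    set (y := r * (kk * (kk - 1)) * j / (2 * nn * L)) in *.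
    assert (Y1 : (3 * L * j) * (2 * nn * L) <= y * (2 * nn * L)) by lra.
    apply Rle_ge. apply Rmult_le_reg_r with (2 * nn * L); [nra|exact Y1]. }
  nra.
Qed.

Lemma lsum_flat_map {X Y} (g : Y -> R) (h : X -> list Y) L : lsum g (flat_map h L) = lsum (fun x => lsum g (h x)) L.
Proof. induction L; simpl; auto. rewrite lsum_app, IHL. auto. Qed.

Lemma lsum_map {X Y} (g : Y -> R) (h : X -> Y) L : lsum g (map h L) = lsum (fun x => g (h x)) L.
Proof. induction L; simpl; auto. rewrite IHL. auto. Qed.

Lemma prob_G_lin n p2 p3 (E : list bool -> list bool -> Prop) {X} (L : list X) (c : X -> R) (Ex : X -> list bool -> list bool -> Prop) :
  0 <= p2 <= 1 -> 0 <= p3 <= 1 -> (forall x, 0 <= c x) ->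
  (forall b2 b3, length b2 = length (pairs n) -> length b3 = length (triples n) -> indic (E b2 b3) <= lsum (fun x => c x * indic (Ex x b2 b3)) L) ->
  prob_G n p2 p3 E <= lsum (fun x => c x * prob_G n p2 p3 (Ex x)) L.
Proof.
  intros Hp2 Hp3 Hc H. unfold prob_G.
  eapply Rle_trans. apply expect_le; auto. intros b2 Hb2. apply expect_le; auto. intros b3 Hb3. apply H; auto.
  rewrite (expect_ext p2 _ _ (fun b2 => lsum (fun x => c x * expect p3 (length (triples n)) (fun b3 => indic (Ex x b2 b3))) L)).
  rewrite expect_lsum. right. apply lsum_ext. intros x. apply expect_scal.
  intros b2 _. rewrite expect_lsum. apply lsum_ext. intros x. apply expect_scal.
Qed.

Lemma prob_G_not n p2 p3 (E : list bool -> list bool -> Prop) :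
  prob_G n p2 p3 (fun b2 b3 => ~ E b2 b3) = 1 - prob_G n p2 p3 E.
Proof.
  unfold prob_G.
  rewrite (expect_ext p2 _ _ (fun b2 => 1 + (-1) * expect p3 (length (triples n)) (fun b3 => indic (E b2 b3)))).
  rewrite expect_plus, expect_const, expect_scal. ring.
  intros b2 _. rewrite (expect_ext p3 _ _ (fun b3 => 1 + (-1) * indic (E b2 b3))).
  rewrite expect_plus, expect_const, expect_scal. ring.
  intros; rewrite indic_not; ring.
Qed.

Lemma prob_G_nonneg n p2 p3 E : 0 <= p2 <= 1 -> 0 <= p3 <= 1 -> 0 <= prob_G n p2 p3 E.
Proof. intros. unfold prob_G. apply expect_nonneg; auto. intros. apply expect_nonneg; auto. intros; apply indic_bounds. Qed.

Lemma union_main n p2 p3 (K : R) : 0 <= p2 <= 1 -> 0 <= p3 <= 1 ->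
  prob_G n p2 p3 (fun b2 b3 => exists (v : nat) (Y D : nat -> nat -> Prop) (T : nat),
          propagation_run n b2 b3 v Y D T /\ K <= INR T /\ (T <= n - 1)%nat)
  <= lsum (fun k => indic (K <= INR k) * lsum (fun Cl => prob_G n p2 p3 (fun b2 b3 => Gev n b2 b3 k Cl)) (choose (seq 0 n) k)) (seq 0 n).
Proof.
  intros Hp2 Hp3.
  set (LL := flat_map (fun k => map (fun Cl => (k, Cl)) (choose (seq 0 n) k)) (seq 0 n)).
  eapply Rle_trans.
  { apply (prob_G_lin n p2 p3 _ LL (fun x => indic (K <= INR (fst x))) (fun x b2 b3 => Gev n b2 b3 (fst x) (snd x))); auto.
    intros; apply indic_bounds.
    intros b2 b3 Hb2 Hb3.
    rewrite (lsum_ext _ (fun x => indic (K <= INR (fst x) /\ Gev n b2 b3 (fst x) (snd x)))) by (intros; symmetry; apply indic_and).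
    eapply Rle_trans; [|apply (indic_union (fun x => K <= INR (fst x) /\ Gev n b2 b3 (fst x) (snd x)))].
    apply indic_imp. intros H. destruct (event_reduce n b2 b3 K Hb2 Hb3 H) as [k [Hk [HK [Cl [HC HG]]]]].
    exists (k, Cl). split; auto. unfold LL. apply in_flat_map. exists k. split; auto. apply in_map; auto. }
  right. unfold LL. rewrite lsum_flat_map. apply lsum_ext. intros k. rewrite lsum_map. simpl.
  rewrite <- lsum_scal. auto.
Qed.

Lemma perk n k eps r : 0 < eps < 1 -> 0 < r -> (k < n)%nat ->
  2 <= ln (INR n) -> r <= ln (INR n) -> 1 + 8 * ln (INR n) ^ 2 / r <= INR n / 2 ->
  r * (1 + 8 * ln (INR n) ^ 2 / r) ^ 2 <= ln (INR n) * INR n -> 24 * ln (INR n) ^ 2 <= r * (INR n - 2) -> 2 <= INR n ->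
  indic (K0 eps r * ln (INR n) <= INR k) *
    lsum (fun Cl => prob_G n ((1 - eps) / INR n) (r / (INR n * ln (INR n))) (fun b2 b3 => Gev n b2 b3 k Cl)) (choose (seq 0 n) k)
  <= exp (-2 * ln (INR n)).
Proof.
  intros He Hr Hkn HL2 HrL Hk1 Hk1b H24 Hn2.
  set (nn := INR n) in *. set (L := ln nn) in *. set (kk := INR k).
  destruct (classic (K0 eps r * L <= kk)) as [HK|HK]; [|rewrite indic_false; auto; pose proof (exp_pos (-2 * L)); lra].
  rewrite indic_true; auto. rewrite Rmult_1_l.
  assert (HK1 : 1 <= K0 eps r) by apply Rmax_l.
  assert (HK2 : 2 * (9 + eps) / r <= K0 eps r) by apply Rmax_r.
  assert (HrK : 18 <= r * K0 eps r). { apply Rmult_le_compat_l with (r := r) in HK2; [|lra].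
    replace (r * (2 * (9 + eps) / r)) with (2 * (9 + eps)) in HK2 by (field; lra). lra. }
  assert (HkL : L <= kk). { assert (L <= K0 eps r * L) by (rewrite <- (Rmult_1_l L) at 1; apply Rmult_le_compat_r; lra). lra. }
  assert (Hk2 : (2 <= k)%nat) by (apply INR_le; simpl; unfold kk in HkL; lra).
  assert (Hp2 : 0 <= (1 - eps) / nn <= 1). { split. apply Rmult_le_pos; [lra|left; apply Rinv_0_lt_compat; lra].
    apply Rmult_le_reg_r with nn; [lra|]. unfold Rdiv. rewrite Rmult_assoc, Rinv_l by lra. lra. }
  assert (Hp3 : 0 <= r / (nn * L) <= 1). { split. apply Rmult_le_pos; [lra|left; apply Rinv_0_lt_compat; nra].
    apply Rmult_le_reg_r with (nn * L); [nra|]. unfold Rdiv. rewrite Rmult_assoc, Rinv_l by nra. nra. }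
  assert (H18 : 18 * L <= r * kk). { assert (r * K0 eps r * L <= r * kk) by (rewrite Rmult_assoc; apply Rmult_le_compat_l; lra). nra. }
  set (k1 := 1 + 8 * L ^ 2 / r) in *.
  destruct (Rle_or_lt kk k1) as [Hs|Hl].
  - eapply Rle_trans.
    { apply lsum_le. intros Cl HC. apply perC_small; auto. lia. }
    rewrite lsum_const, choose_length, length_seq.
    assert (0 <= kk) by (unfold kk; apply pos_INR). assert (kk ^ 2 <= k1 ^ 2) by (apply pow_incr; lra).
    assert (r * kk ^ 2 <= r * k1 ^ 2) by (apply Rmult_le_compat_l; lra).
    apply small_term; auto; try lia; unfold k1, kk, L, nn in *; lra.
  - eapply Rle_trans.
    { apply lsum_le. intros Cl HC. apply perC_large; auto. }
    rewrite lsum_const, choose_length, length_seq.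
    destruct (Rle_or_lt kk (nn / 2)) as [Hh|Hh].
    + assert (Hx : 8 * L ^ 2 <= r * (kk - 1)).
      { assert (8 * L ^ 2 / r < kk - 1) by (unfold k1 in Hl; lra).
        apply Rmult_lt_compat_l with (r := r) in H; [|lra]. replace (r * (8 * L ^ 2 / r)) with (8 * L ^ 2) in H by (field; lra). lra. }
      apply large1; auto; unfold kk, L, nn in *; lra.
    + apply large2; auto; try lia; unfold kk, L, nn in *; lra.
Qed.

Lemma nat_large (M : R) : exists N : nat, forall n, (N <= n)%nat -> M <= INR n.
Proof.
  destruct (archimed (Rabs M)) as [H _]. exists (Z.to_nat (up (Rabs M))). intros n Hn.
  apply le_INR in Hn. rewrite INR_IZR_INZ, Z2Nat.id in Hn.
  - pose proof (Rle_abs M). lra.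
  - apply le_IZR. pose proof (Rabs_pos M). simpl. lra.
Qed.

Lemma cond_suff nn L r : 0 < r -> 2 <= L -> r <= L ->
  (2 * (1 + 8 / r) + r * (1 + 8 / r) ^ 2 + 2 + 24 / r + 1) * L ^ 4 <= nn ->
  1 + 8 * L ^ 2 / r <= nn / 2 /\ r * (1 + 8 * L ^ 2 / r) ^ 2 <= L * nn /\ 24 * L ^ 2 <= r * (nn - 2) /\ 2 <= nn.
Proof.
  intros Hr HL HrL HB.
  set (c1 := 1 + 8 / r) in *. set (M := L ^ 2) in *.
  assert (HM : 4 <= M) by (unfold M; nra).
  assert (HM4 : L ^ 4 = M * M) by (unfold M; ring).
  rewrite HM4 in HB.
  assert (Hs : 0 < 8 / r) by (apply Rdiv_lt_0_compat; lra).
  assert (Hs2 : 0 < 24 / r) by (apply Rdiv_lt_0_compat; lra).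
  assert (Hk1 : 1 + 8 * M / r <= c1 * M). { unfold c1. replace (8 * M / r) with (8 / r * M) by (field; lra). nra. }
  assert (Hk1p : 0 <= 1 + 8 * M / r). { replace (8 * M / r) with (8 / r * M) by (field; lra). nra. }
  assert (Hc1 : 1 <= c1) by (unfold c1; lra).
  assert (HMM : M <= M * M) by nra.
  assert (Hc1M : c1 * M <= c1 * (M * M)) by nra.
  assert (Hrc : r * c1 ^ 2 * (M * M) >= 0) by (apply Rle_ge; apply Rmult_le_pos; [apply Rmult_le_pos; [lra|apply pow_le; lra]|nra]).
  assert (Hsq : r * (1 + 8 * M / r) ^ 2 <= r * (c1 * M) ^ 2).
  { apply Rmult_le_compat_l; [lra|]. apply pow_incr; lra. }
  assert (Hsq2 : r * (c1 * M) ^ 2 = r * c1 ^ 2 * (M * M)) by ring.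
  assert (H24 : 24 / r * (M * M) >= 24 / r * M) by (apply Rle_ge; apply Rmult_le_compat_l; lra).
  assert (H24' : 24 * M = r * (24 / r * M)) by (field; lra).
  assert (Hnn : 0 <= nn). { assert (0 <= (2 * c1 + r * c1 ^ 2 + 2 + 24 / r + 1) * (M * M)).
    { assert (0 <= M * M) by (apply Rmult_le_pos; lra). apply Rmult_le_pos; auto. assert (0 <= r * c1 ^ 2) by (apply Rmult_le_pos; [lra|apply pow_le; lra]). lra. } lra. }
  split; [|split; [|split]].
  - nra.
  - assert (nn <= L * nn) by nra. nra.
  - rewrite H24'. apply Rmult_le_compat_l; [lra|]. nra.
  - nra.
Qed.

Lemma ln_bound nn : 1 <= nn -> ln nn ^ 4 <= 4096 * sqrt nn.
Proof.
  intros Hn.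
  set (s := sqrt (sqrt (sqrt nn))).
  assert (Hs1 : 0 <= sqrt nn) by apply sqrt_pos.
  assert (Hs2 : 0 <= sqrt (sqrt nn)) by apply sqrt_pos.
  assert (Hs0 : 0 < s). { unfold s. apply sqrt_lt_R0. apply sqrt_lt_R0. apply sqrt_lt_R0. lra. }
  assert (E4 : s ^ 4 = sqrt nn). { unfold s. replace 4%nat with (2 * 2)%nat by lia. rewrite pow_mult. simpl.
    rewrite !Rmult_1_r, !sqrt_sqrt; auto. }
  assert (E8 : s ^ 8 = nn). { replace 8%nat with (4 * 2)%nat by lia. rewrite pow_mult, E4. simpl. rewrite Rmult_1_r, sqrt_sqrt; lra. }
  assert (HL : ln nn = 8 * ln s). { rewrite <- E8, ln_pow; auto. simpl. lra. }
  assert (Hls : ln s <= s). { pose proof (exp_ineq1_le (ln s)). rewrite exp_ln in H; auto. lra. }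
  assert (HL0 : 0 <= ln nn). { destruct (Req_dec nn 1) as [Heq|Hne]. rewrite Heq, ln_1. lra. left. rewrite <- ln_1. apply ln_increasing; lra. }
  rewrite <- E4. replace (4096 * s ^ 4) with ((8 * s) ^ 4) by ring.
  apply pow_incr. lra.
Qed.

Lemma ln_ge x y : 0 < y -> exp x <= y -> x <= ln y.
Proof.
  intros Hy H. destruct (Rle_or_lt x (ln y)); auto. exfalso.
  apply exp_increasing in H0. rewrite exp_ln in H0; auto. lra.
Qed.

Theorem lemma3 (eps r : R) (Heps0 : 0 < eps) (Heps1 : eps < 1) (Hr : 0 < r) :
  Un_cv (fun n : nat =>
    prob_G n ((1 - eps) / INR n) (r / (INR n * ln (INR n)))
      (fun b2 b3 => ~ exists (v : nat) (Y D : nat -> nat -> Prop) (T : nat),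
          propagation_run n b2 b3 v Y D T /\
          K0 eps r * ln (INR n) <= INR T /\ (T <= n - 1)%nat))
    1.
Proof.
  intros ε Hε.
  set (B := 2 * (1 + 8 / r) + r * (1 + 8 / r) ^ 2 + 2 + 24 / r + 1).
  assert (HB : 0 < B). { unfold B. assert (0 < 8 / r) by (apply Rdiv_lt_0_compat; lra).
    assert (0 < 24 / r) by (apply Rdiv_lt_0_compat; lra). assert (0 <= r * (1 + 8 / r) ^ 2) by (apply Rmult_le_pos; [lra|apply pow_le; lra]). lra. }
  set (Lm := Rmax 2 r).
  destruct (nat_large (Rmax (Rmax (exp Lm) ((4096 * B) ^ 2)) (Rmax (2 / ε) 3))) as [N HN].
  exists N. intros n Hn. specialize (HN n Hn).
  set (nn := INR n) in *.
  assert (H1 : exp Lm <= nn) by (eapply Rle_trans; [|apply HN]; eapply Rle_trans; [|apply Rmax_l]; apply Rmax_l).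
  assert (H2 : (4096 * B) ^ 2 <= nn) by (eapply Rle_trans; [|apply HN]; eapply Rle_trans; [|apply Rmax_l]; apply Rmax_r).
  assert (H3 : 2 / ε <= nn) by (eapply Rle_trans; [|apply HN]; eapply Rle_trans; [|apply Rmax_r]; apply Rmax_l).
  assert (H4 : 3 <= nn) by (eapply Rle_trans; [|apply HN]; eapply Rle_trans; [|apply Rmax_r]; apply Rmax_r).
  set (L := ln nn).
  assert (HLm : Lm <= L) by (apply ln_ge; auto; lra).
  assert (HL2 : 2 <= L) by (eapply Rle_trans; [apply Rmax_l|apply HLm]).
  assert (HLr : r <= L) by (eapply Rle_trans; [apply Rmax_r|apply HLm]).
  assert (Hsq : 4096 * B <= sqrt nn). { rewrite <- (sqrt_pow2 (4096 * B)) by lra. apply sqrt_le_1; auto. apply pow_le; lra. lra. }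
  assert (HL4 : B * L ^ 4 <= nn).
  { pose proof (ln_bound nn ltac:(lra)) as Hb. fold L in Hb.
    assert (B * L ^ 4 <= B * (4096 * sqrt nn)) by (apply Rmult_le_compat_l; lra).
    assert (0 <= sqrt nn) by apply sqrt_pos.
    assert (Hss : B * (4096 * sqrt nn) <= sqrt nn * sqrt nn) by nra.
    rewrite sqrt_sqrt in Hss by lra. lra. }
  destruct (cond_suff nn L r Hr HL2 HLr HL4) as [C1 [C2 [C3 C4]]].
  assert (Hp2 : 0 <= (1 - eps) / nn <= 1). { split. apply Rmult_le_pos; [lra|left; apply Rinv_0_lt_compat; lra].
    apply Rmult_le_reg_r with nn; [lra|]. unfold Rdiv. rewrite Rmult_assoc, Rinv_l by lra. lra. }
  assert (Hp3 : 0 <= r / (nn * L) <= 1). { split. apply Rmult_le_pos; [lra|left; apply Rinv_0_lt_compat; nra].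
    apply Rmult_le_reg_r with (nn * L); [nra|]. unfold Rdiv. rewrite Rmult_assoc, Rinv_l by nra. nra. }
  unfold R_dist. rewrite prob_G_not.
  set (P := prob_G n ((1 - eps) / nn) (r / (nn * L)) _).
  assert (HP0 : 0 <= P) by (apply prob_G_nonneg; auto).
  assert (HP : P <= / nn).
  { eapply Rle_trans. apply union_main; auto.
    eapply Rle_trans. apply lsum_le with (h := fun _ => exp (-2 * L)). intros k Hk. apply in_seq in Hk.
    apply perk; auto; try lia; fold nn L; lra.
    rewrite lsum_const, length_seq. fold nn.
    replace (-2 * L) with (- L + - L) by ring. rewrite exp_plus, exp_Ropp. unfold L. rewrite exp_ln by lra.
    right. field. lra. }
  assert (/ nn < ε). { apply Rmult_lt_reg_r with nn; [lra|]. rewrite Rinv_l by lra.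
    apply Rmult_le_compat_r with (r := ε) in H3; [|lra]. unfold Rdiv in H3. rewrite Rmult_assoc, Rinv_l in H3 by lra. lra. }
  rewrite Rabs_left1 by lra. lra.
Qed.
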